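(* For every countable ordinal $\alpha$ there is a position in the variant of infinite draughts played with the forced-jump rule but without the forced-iterated-jump rule, whose game value, with Red as the open player, is exactly $\alpha$.
   Context: Infinite draughts is played by two players, Black and Red, on the infinite checkerboard $\mathbb{Z}\times\mathbb{Z}$, using only the dark squares (say those $(x,y)$ with $x+y$ even). A position consists of an arbitrary (possibly infinite) placement of pieces on dark squares, each piece being a black or red pawn or king, together with a specification of which player is to move. Black pawns move only on upward diagonals, red pawns only on downward diagonals; kings may move along all four diagonal directions. A simple move moves a piece one diagonal step, in a permitted direction, to an empty square. A jump moves a piece over a diagonally adjacent enemy piece (in a permitted direction) to the empty square immediately beyond; the jumped enemy piece is captured and removed. A single piece may perform several jumps in succession (an iterated jump), which together count as one turn. If a piece performs an infinite iterated jump, then all enemy pieces jumped are removed and the jumping piece itself is also removed from the board. There is no promotion of pawns. A player loses when it is their turn and they have no legal move; the other player then wins. Infinitely long play is a draw. In the variant considered here: the forced-jump rule is in effect (if a player has any jumping move available, the player must make a jumping move), but the forced-iterated-jump rule is not: after making at least one jump, the player may stop the iterated jump at any point, or continue (possibly infinitely). Game values (with respect to a designated ''open'' player, here Red) are defined by transfinite recursion: (1) a position in which the game is already won for the open player has value $0$; (2) if the game is not yet won and it is the open player's turn, and the open player can move to a position having a value, then the value is $\alpha+1$ where $\alpha$ is the least value of a position reachable in one legal move; (3) if it is the closed player's turn and every position reachable by a legal move has a value, then the value is the supremum of those values; otherwise the value is undefined. *)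

(* Defs.v *)
From Stdlib Require Import ZArith List Bool.
Open Scope Z_scope.

Inductive Ord : Type :=
| OZ : Ord
| OS : Ord -> Ord
| OL : forall (I : Type), (I -> Ord) -> Ord.

Inductive ole : Ord -> Ord -> Prop :=
| ole_zero : forall b, ole OZ b
| ole_succ : forall a b, olt a b -> ole (OS a) b
| ole_lim : forall I (f : I -> Ord) b, (forall i, ole (f i) b) -> ole (OL I f) b
with olt : Ord -> Ord -> Prop :=
| olt_succ : forall a b, ole a b -> olt a (OS b)
| olt_lim : forall a I (f : I -> Ord) (i : I), olt a (f i) -> olt a (OL I f).

Definition oeq (a b : Ord) : Prop := ole a b /\ ole b a.

(* Countable ordinals: exactly those denoted by omega-branching trees. *)
Inductive CTree : Type :=
| CZ : CTree
| CS : CTree -> CTree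
| CL : (nat -> CTree) -> CTree.

Fixpoint embed (c : CTree) : Ord :=
  match c with
  | CZ => OZ
  | CS c' => OS (embed c')
  | CL f => OL nat (fun n => embed (f n))
  end.

Definition countable_ordinal (a : Ord) : Prop := exists c : CTree, oeq a (embed c).

Inductive color : Type := Black | Red.
Inductive kind : Type := Pawn | King.
Record piece : Type := mkPiece { pcol : color; pkind : kind }.

Definition opp (c : color) : color := match c with Black => Red | Red => Black end.

Definition board := Z -> Z -> option piece.

Record position : Type := mkPos { brd : board; to_move : color }.

Definition valid_pos (p : position) : Prop :=
  forall x y, Z.odd (x + y) = true -> brd p x y = None.

Inductive dir : Type := NE | NW | SE | SW.
Definition dx (d : dir) : Z := match d with NE | SE => 1 | NW | SW => -1 end.
Definition dy (d : dir) : Z := match d with NE | NW => 1 | SE | SW => -1 end.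

Definition permitted (pc : piece) (d : dir) : Prop :=
  match pkind pc with
  | King => True
  | Pawn => match pcol pc with Black => dy d = 1 | Red => dy d = -1 end
  end.

Definition upd (b : board) (x y : Z) (v : option piece) : board :=
  fun x' y' => if (x' =? x) && (y' =? y) then v else b x' y'.

Definition simple_move (p q : position) : Prop :=
  exists x y pc d,
    brd p x y = Some pc /\ pcol pc = to_move p /\ permitted pc d /\
    brd p (x + dx d) (y + dy d) = None /\
    q = mkPos (upd (upd (brd p) x y None) (x + dx d) (y + dy d) (Some pc))
              (opp (to_move p)).

(* state of an iterated jump: current board and current square of the jumper *)
Definition jstate := (board * Z * Z)%type.

Definition jump_ok (pc : piece) (st : jstate) (d : dir) : Prop :=
  let '(b, x, y) := st in
  permitted pc d /\
  (exists e, b (x + dx d) (y + dy d) = Some e /\ pcol e <> pcol pc) /\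
  b (x + 2 * dx d) (y + 2 * dy d) = None.

Definition jump_step (pc : piece) (st : jstate) (d : dir) : jstate :=
  let '(b, x, y) := st in
  (upd (upd (upd b x y None) (x + dx d) (y + dy d) None)
       (x + 2 * dx d) (y + 2 * dy d) (Some pc),
   x + 2 * dx d, y + 2 * dy d).

Fixpoint jumps_ok (pc : piece) (st : jstate) (ds : list dir) : Prop :=
  match ds with
  | nil => True
  | d :: ds' => jump_ok pc st d /\ jumps_ok pc (jump_step pc st d) ds'
  end.

Definition jumps_result (pc : piece) (st : jstate) (ds : list dir) : jstate :=
  fold_left (jump_step pc) ds st.

(* finite iterated jump consisting of at least one jump; the player may stop
   at any point (no forced-iterated-jump rule) *)
Definition finite_jump_move (p q : position) : Prop :=
  exists x y pc (ds : list dir),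
    brd p x y = Some pc /\ pcol pc = to_move p /\ ds <> nil /\
    jumps_ok pc (brd p, x, y) ds /\
    (let '(b, _, _) := jumps_result pc (brd p, x, y) ds in
     q = mkPos b (opp (to_move p))).

Fixpoint jiter (pc : piece) (st0 : jstate) (s : nat -> dir) (n : nat) : jstate :=
  match n with
  | O => st0
  | S n' => jump_step pc (jiter pc st0 s n') (s n')
  end.

(* infinite iterated jump: all jumped enemy pieces are removed and the
   jumping piece itself is removed from the board *)
Definition infinite_jump_move (p q : position) : Prop :=
  exists x y pc (s : nat -> dir),
    brd p x y = Some pc /\ pcol pc = to_move p /\
    (forall n, jump_ok pc (jiter pc (brd p, x, y) s n) (s n)) /\
    to_move q = opp (to_move p) /\
    (forall u v,
        let removed :=
          (u = x /\ v = y) \/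
          (exists n, let '(_, xn, yn) := jiter pc (brd p, x, y) s n in
                     u = xn + dx (s n) /\ v = yn + dy (s n)) in
        (removed -> brd q u v = None) /\ (~ removed -> brd q u v = brd p u v)).

Definition jump_move (p q : position) : Prop :=
  finite_jump_move p q \/ infinite_jump_move p q.

Definition legal_move (p q : position) : Prop :=
  jump_move p q \/ ((~ exists q', jump_move p q') /\ simple_move p q).

Definition won_for_red (p : position) : Prop :=
  to_move p = Black /\ ~ exists q, legal_move p q.

(* the three clauses of the transfinite recursive definition, for a
   candidate relation F (F a p : "p has value a") *)
Definition value_clause (F : Ord -> position -> Prop) (a : Ord) (p : position) : Prop :=
  (won_for_red p /\ oeq a OZ)
  \/ (~ won_for_red p /\ to_move p = Red /\
      exists q b, legal_move p q /\ F b q /\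
        (forall q' c, legal_move p q' -> F c q' -> ole b c) /\
        oeq a (OS b))
  \/ (~ won_for_red p /\ to_move p = Black /\
      (forall q, legal_move p q -> exists b, F b q) /\
      (forall q b, legal_move p q -> F b q -> ole b a) /\
      (forall c, (forall q b, legal_move p q -> F b q -> ole b c) -> ole a c)).

(* F solves the recursion (the solution is unique, and is the value relation) *)
Definition value_solution (F : Ord -> position -> Prop) : Prop :=
  forall a p, F a p <-> value_clause F a p.

Definition has_value (p : position) (a : Ord) : Prop :=
  exists F, value_solution F /\ F a p.

(* Main.v *)
Require Import Defs.
From Stdlib Require Import ZArith List Lia Relations Classical ClassicalEpsilon FunctionalExtensionality Bool.
From Stdlib Require Cantor.
Import ListNotations.

Scheme ole_mut := Induction for ole Sort Prop
with olt_mut := Induction for olt Sort Prop.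

Lemma ole_inv x b : ole x b ->
  match x with OZ => True | OS a => olt a b | OL J g => forall i, ole (g i) b end.
Proof. intros H; destruct H; auto. Qed.

Lemma olt_inv a y : olt a y ->
  match y with OZ => False | OS b => ole a b | OL J g => exists i, olt a (g i) end.
Proof. intros H; destruct H; eauto. Qed.

Lemma ole_lim_r I (f : I -> Ord) i x : ole x (f i) -> ole x (OL I f).
Proof.
  induction x as [|x IH|J g IH]; intros H.
  - constructor.
  - apply ole_inv in H. constructor. eapply olt_lim; eauto.
  - apply ole_inv in H. constructor. intros j. apply IH. apply H.
Qed.

Lemma ole_refl x : ole x x.
Proof.
  induction x as [|x IH|J g IH].
  - constructor.
  - constructor. constructor. exact IH.
  - constructor. intros j. eapply ole_lim_r. apply IH.
Qed.

Lemma ole_trans_aux :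
  (forall a b, ole a b -> forall c, ole b c -> ole a c) /\
  (forall a b, olt a b -> forall c, ole b c -> olt a c).
Proof.
  assert (L : forall a b, (forall c', ole b c' -> ole a c') -> forall c, olt b c -> olt a c).
  { intros a b H c; induction c as [|c IH|J g IH]; intros Hc; apply olt_inv in Hc.
    - destruct Hc.
    - constructor. apply H. exact Hc.
    - destruct Hc as [i Hi]. eapply olt_lim. apply IH. exact Hi. }
  split.
  - apply (ole_mut (fun a b _ => forall c, ole b c -> ole a c)
                   (fun a b _ => forall c, ole b c -> olt a c)).
    + intros; constructor.
    + intros a b H IH c Hc. constructor. apply IH. exact Hc.
    + intros I f b H IH c Hc. constructor. intros i. apply IH. exact Hc.
    + intros a b H IH c Hc. apply ole_inv in Hc. eapply L; eauto.
    + intros a I f i H IH c Hc. apply ole_inv in Hc. apply IH. apply Hc.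
  - apply (olt_mut (fun a b _ => forall c, ole b c -> ole a c)
                   (fun a b _ => forall c, ole b c -> olt a c)).
    + intros; constructor.
    + intros a b H IH c Hc. constructor. apply IH. exact Hc.
    + intros I f b H IH c Hc. constructor. intros i. apply IH. exact Hc.
    + intros a b H IH c Hc. apply ole_inv in Hc. eapply L; eauto.
    + intros a I f i H IH c Hc. apply ole_inv in Hc. apply IH. apply Hc.
Qed.

Lemma ole_trans a b c : ole a b -> ole b c -> ole a c.
Proof. intros; eapply (proj1 ole_trans_aux); eauto. Qed.
Lemma olt_ole_trans a b c : olt a b -> ole b c -> olt a c.
Proof. intros; eapply (proj2 ole_trans_aux); eauto. Qed.
Lemma ole_olt_trans a b c : ole a b -> olt b c -> olt a c.
Proof.
  intros H1 H2. revert H2. induction c as [|c IH|J g IH]; intros H2; apply olt_inv in H2.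
  - destruct H2.
  - constructor. eapply ole_trans; eauto.
  - destruct H2 as [i Hi]. eapply olt_lim. apply IH. exact Hi.
Qed.

Lemma olt_ole_aux :
  (forall x y, ole x y -> ole x (OS y)) /\ (forall x y, olt x y -> olt x (OS y) /\ ole x y).
Proof.
  split.
  - apply (ole_mut (fun x y _ => ole x (OS y)) (fun x y _ => olt x (OS y) /\ ole x y)).
    + intros; constructor.
    + intros a b H [IH1 IH2]. constructor. exact IH1.
    + intros I f b H IH. constructor. exact IH.
    + intros a b H IH. split; [constructor; exact IH | exact IH].
    + intros a I f i H [IH1 IH2]. assert (ole a (OL I f)) by (eapply ole_lim_r; eauto).
      split; [constructor|]; auto.
  - apply (olt_mut (fun x y _ => ole x (OS y)) (fun x y _ => olt x (OS y) /\ ole x y)).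
    + intros; constructor.
    + intros a b H [IH1 IH2]. constructor. exact IH1.
    + intros I f b H IH. constructor. exact IH.
    + intros a b H IH. split; [constructor; exact IH | exact IH].
    + intros a I f i H [IH1 IH2]. assert (ole a (OL I f)) by (eapply ole_lim_r; eauto).
      split; [constructor|]; auto.
Qed.

Lemma olt_ole a b : olt a b -> ole a b.
Proof. intros H; apply (proj2 olt_ole_aux) in H; tauto. Qed.

Lemma olt_wf : well_founded olt.
Proof.
  assert (H : forall a x, olt x a -> Acc olt x).
  { induction a as [|a IH|J g IH]; intros x Hx; apply olt_inv in Hx.
    - destruct Hx.
    - constructor. intros z Hz. apply IH. eapply olt_ole_trans; eauto.
    - destruct Hx as [i Hi]. eapply IH; eauto. }
  intros a. constructor. intros y Hy. eapply H; eauto.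
Qed.

Lemma stepS x y : (ole y x \/ olt x y) -> (ole (OS x) y \/ olt y (OS x)).
Proof. intros [H|H]; [right; constructor; exact H| left; constructor; exact H]. Qed.
Lemma stepL I (f : I -> Ord) y : (forall i, ole (f i) y \/ olt y (f i)) -> ole (OL I f) y \/ olt y (OL I f).
Proof.
  intros H. destruct (classic (forall i, ole (f i) y)) as [H1|H1].
  - left; constructor; exact H1.
  - apply not_all_ex_not in H1. destruct H1 as [i Hi]. right. eapply olt_lim.
    destruct (H i); [contradiction|eauto].
Qed.

Lemma ole_total_aux : forall x y, (ole x y \/ olt y x) /\ (ole y x \/ olt x y).
Proof.
  intros x; induction x as [|x IHx|I f IHx]; intros y; induction y as [|y IHy|J g IHy]; split.
  all: first [ left; apply ole_zero
             | apply stepS; solve [apply (proj2 (IHx _)) | apply (proj1 IHy)]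
             | apply stepL; intros; solve [apply (proj1 (IHx _ _)) | apply (proj2 (IHy _))] ].
Qed.

Lemma ole_total x y : ole x y \/ olt y x.
Proof. apply ole_total_aux. Qed.

Lemma min_ex (P : Ord -> Prop) a : P a -> exists b, P b /\ forall c, P c -> ole b c.
Proof.
  induction a as [a IH] using (well_founded_ind olt_wf). intros Pa.
  destruct (classic (forall c, P c -> ole a c)) as [H|H].
  - exists a; auto.
  - apply not_all_ex_not in H. destruct H as [c Hc].
    apply imply_to_and in Hc. destruct Hc as [Pc Hc].
    destruct (ole_total a c) as [H|H]; [contradiction|]. eapply IH; eauto.
Qed.

Inductive Win : Ord -> position -> Prop :=
| W0 : forall a p, won_for_red p -> Win a p
| WR : forall a p q b, ~ won_for_red p -> to_move p = Red -> legal_move p q -> Win b q -> olt b a -> Win a p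
| WB : forall a p, ~ won_for_red p -> to_move p = Black -> (forall q, legal_move p q -> Win a q) -> Win a p.

Lemma Win_mono a p : Win a p -> forall c, ole a c -> Win c p.
Proof.
  induction 1 as [a p H|a p q b H1 H2 H3 H4 IH H5|a p H1 H2 H3 IH]; intros c Hc.
  - apply W0; auto.
  - eapply WR; eauto. eapply olt_ole_trans; eauto.
  - apply WB; auto.
Qed.

Definition Fv (a : Ord) (p : position) : Prop := Win a p /\ forall c, Win c p -> ole a c.

Lemma Fv_ex a p : Win a p -> exists b, Fv b p.
Proof.
  intros H. destruct (min_ex (fun c => Win c p) a H) as [b [Hb1 Hb2]]. exists b; split; auto.
Qed.

Lemma Fv_solution : value_solution Fv.
Proof.
  intros a p. split.
  - intros [HW Hm].
    destruct (classic (won_for_red p)) as [Hw|Hw].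
    + left. split; auto. split; [apply Hm; apply W0; auto| constructor].
    + destruct (to_move p) eqn:Ht.
      * right; right. inversion HW; subst; try contradiction; try congruence.
        split; [auto|]. split; [auto|]. split; [|split].
        -- intros q Hq. apply Fv_ex with a. auto.
        -- intros q b Hq [Hb1 Hb2]. apply Hb2. auto.
        -- intros c Hc. apply Hm. apply WB; auto. intros q Hq.
           destruct (Fv_ex a q) as [b Hb]; auto.
           apply Win_mono with b; [apply Hb| apply (Hc q b Hq Hb)].
      * right; left. inversion HW; subst; try contradiction; try congruence.
        rename q into q0, b into b0.
        destruct (min_ex (fun c => exists q, legal_move p q /\ Win c q) b0) as [b [[q [Hq Hbq]] Hmin]].
        { eauto. }
        split; [auto|]. split; [auto|]. exists q, b. split; [auto|]. split.
        { split; auto. intros c Hc. apply Hmin. eauto. }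
        split.
        { intros q' c Hq' [Hc1 Hc2]. apply Hmin; eauto. }
        split.
        -- apply Hm. eapply WR; eauto. constructor. apply ole_refl.
        -- constructor. eapply ole_olt_trans; [|eauto]. apply Hmin; eauto.
  - intros [[Hw Heq]|[[Hw [Ht [q [b [Hq [Hb [Hmin Heq]]]]]]]|[Hw [Ht [H1 [H2 H3]]]]]].
    + split; [apply W0; auto|]. intros c _. eapply ole_trans; [apply Heq|constructor].
    + split.
      * apply WR with q b; auto; [apply Hb| destruct Heq as [_ He]; apply ole_inv in He; exact He].
      * intros c Hc. inversion Hc; subst; try contradiction; try congruence.
        destruct (Fv_ex b0 q0) as [b'' Hb'']; auto.
        assert (ole b b'') by (eapply Hmin; eauto).
        assert (ole b'' b0) by (apply Hb''; auto).
        eapply ole_trans; [apply Heq|]. constructor.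
        eapply ole_olt_trans; [|eauto]. eapply ole_trans; eauto.
    + split.
      * apply WB; auto. intros q Hq. destruct (H1 q Hq) as [b Hb].
        apply Win_mono with b; [apply Hb| apply (H2 q b Hq Hb)].
      * intros c Hc. inversion Hc; subst; try contradiction; try congruence.
        apply H3. intros q b Hq [Hb1 Hb2]. apply Hb2. auto.
Qed.

Lemma Fv_oeq a b p : Fv a p -> oeq a b -> Fv b p.
Proof.
  intros [H1 H2] [H3 H4]. split.
  - eapply Win_mono; eauto.
  - intros c Hc. eapply ole_trans; [exact H4|]. auto.
Qed.

Fixpoint kids (c : CTree) (n : nat) : option CTree :=
  match c with
  | CZ => None
  | CS d => match n with O => Some d | _ => None end
  | CL f => let (i, j) := Cantor.of_nat n in kids (f i) j
  end.

Lemma kids_sup c :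
  (forall n d, kids c n = Some d -> ole (OS (embed d)) (embed c)) /\
  (forall b, (forall n d, kids c n = Some d -> ole (OS (embed d)) b) -> ole (embed c) b).
Proof.
  induction c as [|c IH|f IH].
  - split; [intros n d H; discriminate| intros; constructor].
  - split.
    + intros [|n] d H; simpl in H; [|discriminate]. inversion H; subst. apply ole_refl.
    + intros b Hb. apply (Hb 0%nat). reflexivity.
  - split.
    + intros n d H. simpl in H. destruct (Cantor.of_nat n) as [i j] eqn:E.
      simpl. eapply ole_lim_r. apply (proj1 (IH i) j). exact H.
    + intros b Hb. simpl. constructor. intros i. apply (proj2 (IH i)).
      intros j d Hd. apply (Hb (Cantor.to_nat (i, j))). unfold kids; fold kids.
      rewrite Cantor.cancel_of_to. exact Hd.
Qed.

Definition hasKids c := exists n d, kids c n = Some d.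

Lemma noKids_zero c : ~ hasKids c -> ole (embed c) OZ.
Proof.
  intros H. apply (proj2 (kids_sup c)). intros n d Hd. exfalso; apply H; exists n, d; exact Hd.
Qed.

Lemma one_le_S x : ole (OS OZ) (OS x).
Proof. constructor. constructor. constructor. Qed.

Lemma hasKids_one c : hasKids c -> ole (OS OZ) (embed c).
Proof.
  intros [n [d H]]. eapply ole_trans; [apply one_le_S|]. apply (proj1 (kids_sup c) n d H).
Qed.

Lemma kid_ind (P : CTree -> Prop) :
  (forall c, (forall n d, kids c n = Some d -> P d) -> P c) -> forall c, P c.
Proof.
  intros Hs c.
  assert (H : P c /\ forall n d, kids c n = Some d -> P d).
  { induction c as [|c IH|f IH].
    - split; [apply Hs|]; intros n d Hd; discriminate.
    - assert (K : forall n d, kids (CS c) n = Some d -> P d).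
      { intros [|n] d Hd; simpl in Hd; [|discriminate]. inversion Hd; subst. apply IH. }
      split; auto.
    - assert (K : forall n d, kids (CL f) n = Some d -> P d).
      { intros n d Hd; simpl in Hd. destruct (Cantor.of_nat n) as [i j].
        apply (proj2 (IH i) j). exact Hd. }
      split; auto. }
  apply H.
Qed.

Open Scope Z_scope.

Definition stp (p : Z*Z*Z) (n : nat) : Z*Z*Z :=
  let '(e, a, s) := p in
  let k := Z.of_nat n + 1 in
  (e + k, a * 2 ^ k + 1, (s + 1) * (2 ^ e - a) * 2 ^ (e + k)).
Definition params (σ : list nat) := fold_left stp σ (3, 0, 0).
Definition E σ := fst (fst (params σ)).
Definition A σ := snd (fst (params σ)).
Definition S σ := snd (params σ).
Definition Q σ := 2 ^ E σ.

Lemma params_snoc σ b : params (σ ++ [b]) = stp (params σ) b.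
Proof. unfold params. rewrite fold_left_app. reflexivity. Qed.

Lemma E_snoc σ b : E (σ ++ [b]) = E σ + (Z.of_nat b + 1).
Proof. unfold E. rewrite params_snoc. destruct (params σ) as [[e a] s]. reflexivity. Qed.
Lemma A_snoc σ b : A (σ ++ [b]) = A σ * 2 ^ (Z.of_nat b + 1) + 1.
Proof. unfold A. rewrite params_snoc. destruct (params σ) as [[e a] s]. reflexivity. Qed.
Lemma S_snoc σ b : S (σ ++ [b]) = (S σ + 1) * (Q σ - A σ) * Q (σ ++ [b]).
Proof. unfold S, Q. rewrite E_snoc. unfold E, A, S. rewrite params_snoc. destruct (params σ) as [[e a] s]. reflexivity. Qed.

Lemma E_nil : E [] = 3. Proof. reflexivity. Qed.
Lemma A_nil : A [] = 0. Proof. reflexivity. Qed.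
Lemma S_nil : S [] = 0. Proof. reflexivity. Qed.
Lemma Q_nil : Q [] = 8. Proof. reflexivity. Qed.

Lemma E_ge σ : 3 <= E σ.
Proof.
  induction σ as [|b σ IH] using rev_ind; [rewrite E_nil; lia|]. rewrite E_snoc. lia.
Qed.

Lemma Q_snoc σ b : Q (σ ++ [b]) = Q σ * 2 ^ (Z.of_nat b + 1).
Proof. unfold Q. rewrite E_snoc. rewrite Z.pow_add_r; [reflexivity| pose proof (E_ge σ); lia | lia]. Qed.

Lemma pow_ge2 b : 2 <= 2 ^ (Z.of_nat b + 1).
Proof.
  rewrite Z.pow_add_r by lia. rewrite Z.pow_1_r.
  pose proof (Z.pow_pos_nonneg 2 (Z.of_nat b)). lia.
Qed.

Lemma inv σ : 0 <= A σ /\ 8 * (A σ + 1) <= Q σ /\ 0 <= S σ.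
Proof.
  induction σ as [|b σ IH] using rev_ind.
  - rewrite A_nil, Q_nil, S_nil. lia.
  - rewrite A_snoc, Q_snoc, S_snoc, Q_snoc. pose proof (pow_ge2 b).
    set (K := 2 ^ (Z.of_nat b + 1)) in *. destruct IH as (H1 & H2 & H3).
    pose proof (S_ge_aux := H3). 
    assert (0 <= A σ * K) by nia.
    split; [lia|]. split; [nia|].
    assert (0 < Q σ - A σ) by lia. assert (0 < Q σ * K) by nia.
    apply Z.mul_nonneg_nonneg; [|lia]. apply Z.mul_nonneg_nonneg; lia.
Qed.

Lemma A_ge σ : 0 <= A σ. Proof. apply inv. Qed.
Lemma Q_ge σ : 8 * (A σ + 1) <= Q σ. Proof. apply inv. Qed.
Lemma S_ge σ : 0 <= S σ. Proof. apply inv. Qed.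

Definition Hb τ := let σ := removelast τ in (S σ + 1) * Q σ * (Q τ - A τ).
Definition Ubr τ := let σ := removelast τ in (S σ + 1) * (Q τ - A τ) * A σ.
Definition U τ h := if h <? S τ then Ubr τ + (h - Hb τ) else h * A τ / Q τ.
Definition gp τ h := (τ = [] /\ 0 <= h) \/ (τ <> [] /\ Hb τ < h).

Lemma removelast_snoc {X} (σ : list X) b : removelast (σ ++ [b]) = σ.
Proof. apply removelast_last. Qed.

Lemma Hb_snoc σ b : Hb (σ ++ [b]) = (S σ + 1) * Q σ * (Q (σ ++ [b]) - A (σ ++ [b])).
Proof. unfold Hb. rewrite removelast_snoc. reflexivity. Qed.
Lemma Ubr_snoc σ b : Ubr (σ ++ [b]) = (S σ + 1) * (Q (σ ++ [b]) - A (σ ++ [b])) * A σ.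
Proof. unfold Ubr. rewrite removelast_snoc. reflexivity. Qed.

Section Child.
Variables (σ : list nat) (b : nat).
Let τ := σ ++ [b].

Lemma child_facts :
  let Y := S σ + 1 in let K := 2 ^ (Z.of_nat b + 1) in
  Q τ = Q σ * K /\ A τ = A σ * K + 1 /\
  Hb τ = Y * Q σ * (Q τ - A τ) /\ S τ = Y * (Q σ - A σ) * Q τ /\
  Ubr τ = Y * (Q τ - A τ) * A σ.
Proof.
  intros Y K. unfold τ. rewrite Q_snoc, A_snoc, Hb_snoc, S_snoc, Ubr_snoc, Q_snoc, A_snoc. tauto.
Qed.

Lemma S_minus_Hb : S τ - Hb τ = (S σ + 1) * Q σ.
Proof. destruct child_facts as (H1 & H2 & H3 & H4 & H5). rewrite H3, H4, H1, H2. ring. Qed.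

Lemma Hb_gt_S : S σ < Hb τ.
Proof.
  destruct child_facts as (H1 & H2 & H3 & H4 & H5). pose proof (pow_ge2 b).
  pose proof (Q_ge σ). pose proof (A_ge σ). pose proof (S_ge σ).
  rewrite H3, H1, H2. set (K := 2 ^ (Z.of_nat b + 1)) in *.
  assert (7 * K <= (Q σ - A σ) * K) by nia.
  assert (1 <= Q σ * K - (A σ * K + 1)) by nia.
  assert ((S σ + 1) * Q σ * 1 <= (S σ + 1) * Q σ * (Q σ * K - (A σ * K + 1))).
  { apply Z.mul_le_mono_nonneg_l; nia. }
  nia.
Qed.

Lemma Hb_ge3Q : 3 * Q τ <= Hb τ.
Proof.
  destruct child_facts as (H1 & H2 & H3 & H4 & H5). pose proof (pow_ge2 b).
  pose proof (Q_ge σ). pose proof (A_ge σ). pose proof (S_ge σ).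
  rewrite H3, H1, H2. set (K := 2 ^ (Z.of_nat b + 1)) in *.
  assert (7 * K <= (Q σ - A σ) * K) by nia.
  assert (4 * (Q σ * K) <= 8 * (Q σ * K - (A σ * K + 1))) by nia.
  assert (1 * 8 * (Q σ * K - (A σ * K + 1)) <= (S σ + 1) * Q σ * (Q σ * K - (A σ * K + 1))).
  { apply Z.mul_le_mono_nonneg_r; nia. }
  nia.
Qed.

Lemma S_gt_Hb : Hb τ + 8 <= S τ.
Proof. pose proof S_minus_Hb. pose proof (Q_ge σ). pose proof (A_ge σ). pose proof (S_ge σ). nia. Qed.

Lemma Hb_mult : Hb τ = Q σ * ((S σ + 1) * (Q τ - A τ)).
Proof. destruct child_facts as (H1 & H2 & H3 & H4 & H5). rewrite H3. ring. Qed.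

Lemma S_mult : S τ = Q τ * ((S σ + 1) * (Q σ - A σ)).
Proof. destruct child_facts as (H1 & H2 & H3 & H4 & H5). rewrite H4. ring. Qed.

Lemma slope_gap : A τ * Q σ - A σ * Q τ = Q σ.
Proof. destruct child_facts as (H1 & H2 & H3 & H4 & H5). rewrite H1, H2. ring. Qed.

Lemma root_U : S τ * A τ / Q τ = Ubr τ + (S τ - Hb τ).
Proof.
  rewrite S_minus_Hb. rewrite S_mult. rewrite (Z.mul_comm (Q τ)), <- Z.mul_assoc, (Z.mul_comm (Q τ)), Z.mul_assoc.
  rewrite Z.div_mul by (pose proof (Q_ge τ); pose proof (A_ge τ); lia).
  destruct child_facts as (H1 & H2 & H3 & H4 & H5). rewrite H5, H1, H2. ring.
Qed.

Lemma branch_U : Hb τ * A σ / Q σ = Ubr τ.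
Proof.
  rewrite Hb_mult. rewrite (Z.mul_comm (Q σ)), <- Z.mul_assoc, (Z.mul_comm (Q σ)), Z.mul_assoc.
  rewrite Z.div_mul by (pose proof (Q_ge σ); pose proof (A_ge σ); lia).
  destruct child_facts as (H1 & H2 & H3 & H4 & H5). rewrite H5. ring.
Qed.
End Child.

Open Scope Z_scope.

Lemma Q_pos σ : 0 < Q σ. Proof. pose proof (Q_ge σ); pose proof (A_ge σ); lia. Qed.

Lemma SL2 σ ρ : A σ * Q (σ ++ ρ) <= A (σ ++ ρ) * Q σ /\
                A (σ ++ ρ) * Q σ <= (A σ + 1) * Q (σ ++ ρ) - Q σ.
Proof.
  induction ρ as [|m ρ IH] using rev_ind.
  - rewrite app_nil_r. lia.
  - rewrite app_assoc, A_snoc, Q_snoc. pose proof (pow_ge2 m).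
    set (K := 2 ^ (Z.of_nat m + 1)) in *. set (τ := σ ++ ρ) in *.
    pose proof (Q_pos σ). pose proof (Q_pos τ). pose proof (A_ge σ). destruct IH as [I1 I2].
    split; nia.
Qed.

Lemma pow_mono b1 b2 : (b1 < b2)%nat -> 2 * 2 ^ (Z.of_nat b1 + 1) <= 2 ^ (Z.of_nat b2 + 1).
Proof.
  intros H. rewrite <- Z.pow_succ_r by lia. apply Z.pow_le_mono_r; lia.
Qed.

Lemma SL3 π b1 b2 : (b1 < b2)%nat ->
  (A (π ++ [b2]) + 1) * Q (π ++ [b1]) <= A (π ++ [b1]) * Q (π ++ [b2]).
Proof.
  intros H. rewrite !A_snoc, !Q_snoc. pose proof (pow_mono _ _ H). pose proof (pow_ge2 b1).
  pose proof (Q_pos π). pose proof (A_ge π).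
  set (K1 := 2 ^ (Z.of_nat b1 + 1)) in *. set (K2 := 2 ^ (Z.of_nat b2 + 1)) in *. nia.
Qed.

Lemma sib_heights π b1 b2 : (b1 < b2)%nat -> S (π ++ [b1]) < Hb (π ++ [b2]).
Proof.
  intros H. rewrite Hb_snoc, S_snoc, !Q_snoc, A_snoc. pose proof (pow_mono _ _ H). pose proof (pow_ge2 b1).
  pose proof (Q_pos π). pose proof (A_ge π). pose proof (Q_ge π). pose proof (S_ge π).
  set (K1 := 2 ^ (Z.of_nat b1 + 1)) in *. set (K2 := 2 ^ (Z.of_nat b2 + 1)) in *.
  set (Y := S π + 1). assert (0 < Y) by (unfold Y; lia).
  assert (X : (Q π - A π) * K1 < Q π * K2 - (A π * K2 + 1)) by nia.
  assert (EQ: Y * (Q π - A π) * (Q π * K1) = Y * Q π * ((Q π - A π) * K1)) by ring.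
  rewrite EQ. apply Z.mul_lt_mono_pos_l; nia.
Qed.

Lemma D1 τ ρ : S τ <= S (τ ++ ρ).
Proof.
  induction ρ as [|m ρ IH] using rev_ind; [rewrite app_nil_r; lia|].
  rewrite app_assoc. pose proof (S_gt_Hb (τ ++ ρ) m). pose proof (Hb_gt_S (τ ++ ρ) m). lia.
Qed.

Lemma D2 τ ρ : ρ <> [] -> S τ < Hb (τ ++ ρ).
Proof.
  destruct ρ as [|m ρ] using rev_ind; [congruence|]. intros _.
  rewrite app_assoc. pose proof (Hb_gt_S (τ ++ ρ) m). pose proof (D1 τ ρ). lia.
Qed.

Lemma Hb_first σ b ρ : Hb (σ ++ [b]) <= Hb (σ ++ b :: ρ).
Proof.
  destruct ρ as [|m ρ]; [lia|].
  replace (σ ++ b :: m :: ρ) with ((σ ++ [b]) ++ m :: ρ) by (rewrite <- app_assoc; reflexivity).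
  pose proof (D2 (σ ++ [b]) (m :: ρ) ltac:(congruence)). pose proof (S_gt_Hb σ b). lia.
Qed.

Lemma Hb_ge3Q' τ : τ <> [] -> 3 * Q τ <= Hb τ.
Proof. destruct τ as [|m τ] using rev_ind; [congruence|]. intros; apply Hb_ge3Q. Qed.
Lemma S_gtHb' τ : τ <> [] -> Hb τ + 8 <= S τ.
Proof. destruct τ as [|m τ] using rev_ind; [congruence|]. intros; apply S_gt_Hb. Qed.

Lemma U_ray τ h : S τ <= h -> U τ h = h * A τ / Q τ.
Proof. intros H. unfold U. destruct (Z.ltb_spec h (S τ)); lia. Qed.
Lemma U_conn τ h : h < S τ -> U τ h = Ubr τ + (h - Hb τ).
Proof. intros H. unfold U. destruct (Z.ltb_spec h (S τ)); lia. Qed.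

Lemma gp_nonneg τ h : gp τ h -> 0 <= h.
Proof.
  intros [[_ H]|[Hn H]]; [lia|]. pose proof (Hb_ge3Q' τ Hn). pose proof (Q_pos τ). lia.
Qed.

Lemma U_nonneg τ h : gp τ h -> 0 <= U τ h.
Proof.
  intros Hg. pose proof (gp_nonneg _ _ Hg). destruct (Z.ltb_spec h (S τ)).
  - rewrite U_conn by lia. destruct Hg as [[-> _]|[Hn Hh]]; [rewrite S_nil in *; lia|].
    destruct τ as [|m τ] using rev_ind; [congruence|]. rewrite Ubr_snoc.
    pose proof (S_ge τ). pose proof (A_ge τ). pose proof (Q_ge (τ ++ [m])). pose proof (A_ge (τ++[m])).
    assert (0 <= (S τ + 1) * (Q (τ ++ [m]) - A (τ ++ [m])) * A τ) by (apply Z.mul_nonneg_nonneg; nia).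
    lia.
  - rewrite U_ray by lia. apply Z.div_pos; [|apply Q_pos]. pose proof (A_ge τ); nia.
Qed.

Lemma UB τ h : gp τ h -> Q τ * U τ h <= h * A τ.
Proof.
  intros Hg. pose proof (gp_nonneg _ _ Hg). destruct (Z.ltb_spec h (S τ)).
  - destruct Hg as [[-> _]|[Hn Hh]]; [rewrite S_nil in *; lia|].
    destruct τ as [|m σ] using rev_ind; [congruence|]. rewrite U_conn by lia.
    pose proof (root_U σ m) as R. pose proof (S_mult σ m) as SM.
    set (τ := σ ++ [m]) in *.
    set (M := (S σ + 1) * (Q σ - A σ)) in *.
    assert (E1 : S τ * A τ / Q τ = M * A τ).
    { rewrite SM. rewrite (Z.mul_comm (Q τ)), <- Z.mul_assoc, (Z.mul_comm (Q τ)), Z.mul_assoc.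
      apply Z.div_mul. pose proof (Q_pos τ); lia. }
    rewrite E1 in R. pose proof (Q_ge τ). pose proof (A_ge τ).
    assert (Q τ * (Ubr τ + (S τ - Hb τ)) = S τ * A τ) by (rewrite <- R, SM; ring).
    nia.
  - rewrite U_ray by lia. pose proof (Q_pos τ). apply Z.mul_div_le. lia.
Qed.

Lemma LB_ray τ h : S τ <= h -> h * A τ < Q τ * (U τ h + 1).
Proof.
  intros H. rewrite U_ray by lia. pose proof (Q_pos τ).
  pose proof (Z.mod_pos_bound (h * A τ) (Q τ) H0). pose proof (Z.div_mod (h * A τ) (Q τ)). lia.
Qed.

Lemma LB_conn σ b h : Hb (σ ++ [b]) < h -> h < S (σ ++ [b]) ->
  h * A σ <= Q σ * U (σ ++ [b]) h.
Proof.
  intros H1 H2. rewrite U_conn by lia. pose proof (branch_U σ b) as BU. pose proof (Hb_mult σ b) as HM.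
  set (τ := σ ++ [b]) in *. set (X := (S σ + 1) * (Q τ - A τ)) in *.
  assert (E1 : Hb τ * A σ / Q σ = X * A σ).
  { rewrite HM. rewrite (Z.mul_comm (Q σ)), <- Z.mul_assoc, (Z.mul_comm (Q σ)), Z.mul_assoc.
    apply Z.div_mul. pose proof (Q_pos σ); lia. }
  rewrite E1 in BU. pose proof (Q_ge σ). pose proof (A_ge σ).
  assert (Q σ * Ubr τ = Hb τ * A σ) by (rewrite <- BU, HM; ring). nia.
Qed.

Lemma sep_arith Ua Ub h Aa Qa Ab Qb D :
  0 < Qa -> 0 < Qb -> 0 <= h -> h * Aa < Qa * (Ua + 1) -> Qb * Ub <= h * Ab ->
  Ab * Qa + D <= Aa * Qb -> 3 * Qa * Qb <= h * D -> Ub + 3 <= Ua.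
Proof.
  intros HQa HQb Hh H1 H2 H3 H4.
  assert (X1 : Qb * (h * Aa) < Qb * (Qa * (Ua + 1))) by (apply Z.mul_lt_mono_pos_l; auto).
  assert (X2 : h * (Ab * Qa + D) <= h * (Aa * Qb)) by (apply Z.mul_le_mono_nonneg_l; auto).
  assert (X3 : Qa * (Qb * Ub) <= Qa * (h * Ab)) by (apply Z.mul_le_mono_nonneg_l; lia).
  assert (X4 : Qa * Qb * (Ub + 3) < Qa * Qb * (Ua + 1)) by nia.
  assert (0 < Qa * Qb) by nia.
  apply Z.mul_lt_mono_pos_l in X4; auto. lia.
Qed.

Open Scope Z_scope.

Lemma addr_cases (τ1 τ2 : list nat) : τ1 <> τ2 ->
  (exists b ρ, τ2 = τ1 ++ b :: ρ) \/ (exists b ρ, τ1 = τ2 ++ b :: ρ) \/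
  (exists π b1 b2 ρ1 ρ2, b1 <> b2 /\ τ1 = π ++ b1 :: ρ1 /\ τ2 = π ++ b2 :: ρ2).
Proof.
  revert τ2. induction τ1 as [|x r IH]; intros τ2 Hne.
  - destruct τ2 as [|y r']; [congruence|]. left. exists y, r'. reflexivity.
  - destruct τ2 as [|y r'].
    + right; left. exists x, r. reflexivity.
    + destruct (Nat.eq_dec x y) as [->|Hxy].
      * assert (r <> r') by congruence. destruct (IH r' H) as [[b [ρ E]]|[[b [ρ E]]|[π [b1 [b2 [ρ1 [ρ2 (H1&H2&H3)]]]]]]].
        -- left. exists b, ρ. rewrite E. reflexivity.
        -- right; left. exists b, ρ. rewrite E. reflexivity.
        -- right; right. exists (y :: π), b1, b2, ρ1, ρ2. rewrite H2, H3. auto.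
      * right; right. exists [], x, y, r, r'. auto.
Qed.

Lemma snoc_cons (σ : list nat) b ρ : σ ++ b :: ρ = (σ ++ [b]) ++ ρ.
Proof. rewrite <- app_assoc. reflexivity. Qed.

Lemma gp_desc_h σ b ρ h : gp (σ ++ b :: ρ) h -> Hb (σ ++ [b]) < h.
Proof.
  intros [[E _]|[_ H]]; [destruct σ; discriminate|]. pose proof (Hb_first σ b ρ). lia.
Qed.

Lemma LBd σ b ρ h : gp (σ ++ b :: ρ) h -> (ρ <> [] \/ S (σ ++ b :: ρ) <= h) ->
  h * A (σ ++ [b]) < Q (σ ++ [b]) * (U (σ ++ b :: ρ) h + 1).
Proof.
  intros Hg Hc. set (τ0 := σ ++ [b]). pose proof (gp_nonneg _ _ Hg) as Hh.
  assert (Et : σ ++ b :: ρ = τ0 ++ ρ) by apply snoc_cons. rewrite Et in *.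
  destruct (Z.le_gt_cases (S (τ0 ++ ρ)) h) as [Hr|Hc2].
  - pose proof (LB_ray _ _ Hr). destruct (SL2 τ0 ρ) as [L _].
    pose proof (Q_pos (τ0 ++ ρ)). pose proof (Q_pos τ0). pose proof (A_ge τ0).
    set (τ := τ0 ++ ρ) in *.
    assert (X0 : Q τ0 * (h * A τ) < Q τ0 * (Q τ * (U τ h + 1))) by (apply Z.mul_lt_mono_pos_l; lia).
    assert (X : Q τ * (h * A τ0) < Q τ * (Q τ0 * (U τ h + 1))) by nia.
    apply Z.mul_lt_mono_pos_l in X; lia.
  - destruct Hc as [Hn|Hc]; [|lia].
    destruct ρ as [|m ρ'] using rev_ind; [congruence|]. clear IHρ'.
    rewrite app_assoc in *. set (par := τ0 ++ ρ') in *.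
    destruct Hg as [[E _]|[_ Hg]]; [destruct par; discriminate|].
    pose proof (LB_conn par m h Hg Hc2). destruct (SL2 τ0 ρ') as [L _].
    fold par in L. pose proof (Q_pos par). pose proof (Q_pos τ0). pose proof (A_ge τ0).
    set (τ := par ++ [m]) in *.
    assert (X : Q par * (h * A τ0) <= Q par * (Q τ0 * U τ h)).
    { apply Z.le_trans with (Q τ0 * (h * A par)); [nia|]. nia. }
    apply Z.mul_le_mono_pos_l in X; lia.
Qed.

Lemma sepA π b1 b2 ρ1 ρ2 h : (b1 < b2)%nat -> gp (π ++ b1 :: ρ1) h -> gp (π ++ b2 :: ρ2) h ->
  U (π ++ b2 :: ρ2) h + 3 <= U (π ++ b1 :: ρ1) h.
Proof.
  intros Hb Hg1 Hg2.
  pose proof (gp_desc_h _ _ _ _ Hg2) as Hh2. pose proof (sib_heights π b1 b2 Hb) as Hs.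
  assert (Hc : ρ1 <> [] \/ S (π ++ b1 :: ρ1) <= h).
  { destruct ρ1; [right; lia| left; congruence]. }
  pose proof (LBd _ _ _ _ Hg1 Hc) as L1.
  pose proof (UB _ _ Hg2) as U2.
  set (τ2 := π ++ b2 :: ρ2) in *.
  assert (Gap : A τ2 * Q (π ++ [b1]) + Q (π ++ [b1]) <= A (π ++ [b1]) * Q τ2).
  { pose proof (SL2 (π ++ [b2]) ρ2) as [_ Up]. rewrite <- snoc_cons in Up. fold τ2 in Up.
    pose proof (SL3 π b1 b2 Hb) as S3.
    pose proof (Q_pos (π ++ [b1])). pose proof (Q_pos (π ++ [b2])). pose proof (Q_pos τ2).
    set (Q1 := Q (π ++ [b1])) in *. set (Q2' := Q (π ++ [b2])) in *.
    assert (X : Q2' * (A τ2 * Q1 + Q1) <= Q2' * (A (π ++ [b1]) * Q τ2)) by nia.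
    apply Z.mul_le_mono_pos_l in X; lia. }
  assert (H3 : 3 * Q τ2 <= h).
  { assert (τ2 <> []) by (unfold τ2; destruct π; discriminate).
    pose proof (Hb_ge3Q' τ2 H). destruct Hg2 as [[E _]|[_ Hg2]]; [congruence|lia]. }
  pose proof (Q_pos (π ++ [b1])). pose proof (Q_pos τ2).
  apply (sep_arith (U (π ++ b1 :: ρ1) h) (U τ2 h) h (A (π ++ [b1])) (Q (π ++ [b1])) (A τ2) (Q τ2) (Q (π ++ [b1]))); auto.
  - apply gp_nonneg with τ2; auto.
  - assert (Q (π ++ [b1]) * (3 * Q τ2) <= Q (π ++ [b1]) * h) by (apply Z.mul_le_mono_nonneg_l; lia).
    lia.
Qed.

Lemma branch_exact σ b h : Hb (σ ++ [b]) < h -> h < S (σ ++ [b]) ->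
  U σ h + 2 <= U (σ ++ [b]) h \/ (h = Hb (σ ++ [b]) + 1 /\ U (σ ++ [b]) h = U σ h + 1).
Proof.
  intros H1 H2. pose proof (Hb_gt_S σ b). rewrite U_ray by lia. rewrite U_conn by lia.
  pose proof (branch_U σ b) as BU. pose proof (Hb_mult σ b) as HM.
  set (τ := σ ++ [b]) in *. set (X := (S σ + 1) * (Q τ - A τ)) in *.
  assert (E1 : Hb τ * A σ / Q σ = X * A σ).
  { rewrite HM. rewrite (Z.mul_comm (Q σ)), <- Z.mul_assoc, (Z.mul_comm (Q σ)), Z.mul_assoc.
    apply Z.div_mul. pose proof (Q_pos σ); lia. }
  rewrite E1 in BU. rewrite <- BU.
  set (t := h - Hb τ).
  assert (Eh : h * A σ = (t * A σ) + (X * A σ) * Q σ) by (unfold t; rewrite HM; ring).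
  rewrite Eh. rewrite Z.div_add by (pose proof (Q_pos σ); lia).
  pose proof (Q_ge σ). pose proof (A_ge σ). pose proof (Q_pos σ).
  assert (0 <= t * A σ / Q σ) by (apply Z.div_pos; nia).
  assert (Hq : Q σ * (t * A σ / Q σ) <= t * A σ) by (apply Z.mul_div_le; lia).
  assert (8 * (t * A σ / Q σ) < t) by nia.
  destruct (Z.eq_dec t 1) as [Ht|Ht].
  - right. split; [unfold t in Ht; lia|]. lia.
  - left. lia.
Qed.

Lemma sepB τ1 b ρ h : gp τ1 h -> gp (τ1 ++ b :: ρ) h ->
  U τ1 h + 2 <= U (τ1 ++ b :: ρ) h \/
  (ρ = [] /\ h = Hb (τ1 ++ [b]) + 1 /\ U (τ1 ++ [b]) h = U τ1 h + 1).
Proof.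
  intros Hg1 Hg2. pose proof (gp_desc_h _ _ _ _ Hg2) as Hh2. pose proof (Hb_gt_S τ1 b) as HS.
  pose proof (UB _ _ Hg1) as U1. pose proof (gp_nonneg _ _ Hg1) as Hh.
  pose proof (slope_gap τ1 b) as SG.
  destruct ρ as [|m ρ'].
  - destruct (Z.le_gt_cases (S (τ1 ++ [b])) h) as [Hr|Hc].
    + left. pose proof (LB_ray _ _ Hr). pose proof (Q_pos τ1). pose proof (Q_pos (τ1 ++ [b])).
      pose proof (S_gtHb' (τ1 ++ [b]) ltac:(destruct τ1; discriminate)).
      pose proof (Hb_ge3Q τ1 b).
      assert (U τ1 h + 3 <= U (τ1 ++ [b]) h); [|lia].
      apply (sep_arith (U (τ1 ++ [b]) h) (U τ1 h) h (A (τ1 ++ [b])) (Q (τ1 ++ [b])) (A τ1) (Q τ1) (Q τ1)); auto; try lia.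
      assert (Q τ1 * (3 * Q (τ1 ++ [b])) <= Q τ1 * h) by (apply Z.mul_le_mono_nonneg_l; lia). lia.
    + destruct (branch_exact τ1 b h Hh2 Hc) as [X|X]; [left; auto| right; tauto].
  - left.
    assert (Hnn : m :: ρ' <> []) by congruence.
    pose proof (LBd τ1 b (m :: ρ') h Hg2 (or_introl Hnn)) as L.
    assert (Hh3 : Hb (τ1 ++ b :: m :: ρ') < h).
    { destruct Hg2 as [[E _]|[_ Hg2]]; [destruct τ1; discriminate|exact Hg2]. }
    pose proof (D2 (τ1 ++ [b]) (m :: ρ') Hnn) as D.
    rewrite <- snoc_cons in D.
    pose proof (Hb_ge3Q τ1 b). pose proof (S_gt_Hb τ1 b).
    pose proof (Q_pos τ1). pose proof (Q_pos (τ1 ++ [b])).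
    assert (U τ1 h + 3 <= U (τ1 ++ b :: m :: ρ') h); [|lia].
    apply (sep_arith (U (τ1 ++ b :: m :: ρ') h) (U τ1 h) h (A (τ1 ++ [b])) (Q (τ1 ++ [b])) (A τ1) (Q τ1) (Q τ1)); auto; try lia.
    assert (Q τ1 * (3 * Q (τ1 ++ [b])) <= Q τ1 * h) by (apply Z.mul_le_mono_nonneg_l; lia). lia.
Qed.

Lemma sep τ1 τ2 h : gp τ1 h -> gp τ2 h -> τ1 <> τ2 ->
  U τ1 h + 2 <= U τ2 h \/ U τ2 h + 2 <= U τ1 h \/
  (exists b, τ2 = τ1 ++ [b] /\ h = Hb τ2 + 1 /\ U τ2 h = U τ1 h + 1) \/
  (exists b, τ1 = τ2 ++ [b] /\ h = Hb τ1 + 1 /\ U τ1 h = U τ2 h + 1).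
Proof.
  intros Hg1 Hg2 Hne.
  destruct (addr_cases τ1 τ2 Hne) as [[b [ρ E]]|[[b [ρ E]]|[π [b1 [b2 [ρ1 [ρ2 (H1&H2&H3)]]]]]]].
  - subst τ2. destruct (sepB τ1 b ρ h Hg1 Hg2) as [X|(-> & X1 & X2)]; [left; auto|].
    right; right; left. exists b. auto.
  - subst τ1. destruct (sepB τ2 b ρ h Hg2 Hg1) as [X|(-> & X1 & X2)]; [right; left; auto|].
    right; right; right. exists b. auto.
  - subst. destruct (Nat.lt_total b1 b2) as [Hl|[Hl|Hl]]; [|lia|].
    + right; left. pose proof (sepA π b1 b2 ρ1 ρ2 h Hl Hg1 Hg2). lia.
    + left. pose proof (sepA π b2 b1 ρ2 ρ1 h Hl Hg2 Hg1). lia.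
Qed.

Open Scope Z_scope.

Fixpoint lab (c : CTree) (σ : list nat) : option CTree :=
  match σ with
  | [] => Some c
  | n :: σ' => match kids c n with Some d => lab d σ' | None => None end
  end.

Lemma lab_snoc c σ b : lab c (σ ++ [b]) = match lab c σ with Some d => kids d b | None => None end.
Proof.
  revert c; induction σ as [|n σ IH]; intros c; simpl.
  - destruct (kids c b); reflexivity.
  - destruct (kids c n); [apply IH|reflexivity].
Qed.

Lemma lab_app_none c σ ρ : lab c σ = None -> lab c (σ ++ ρ) = None.
Proof.
  revert c; induction σ as [|n σ IH]; intros c H; simpl in *; [discriminate|].
  destruct (kids c n); [apply IH; auto|reflexivity].
Qed.

Lemma lattice_div (m t a q : Z) : 0 < q -> 0 <= a -> 0 <= t -> t * a < q ->
  (q * m + t) * a / q = m * a.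
Proof.
  intros Hq Ha Ht Hta.
  replace ((q * m + t) * a) with (t * a + (m * a) * q) by ring.
  rewrite Z.div_add by lia. rewrite Z.div_small by nia. ring.
Qed.

Section Tree.
Variable c0 : CTree.
Hypothesis Hc0 : hasKids c0.

Definition valid τ := exists d, lab c0 τ = Some d.
Definition live τ := exists d, lab c0 τ = Some d /\ hasKids d.
Definition present τ h := valid τ /\ gp τ h /\ (h <= S τ \/ live τ).

Lemma valid_nil : valid []. Proof. exists c0; reflexivity. Qed.
Lemma live_nil : live []. Proof. exists c0; split; [reflexivity|exact Hc0]. Qed.

Lemma valid_parent σ b : valid (σ ++ [b]) -> live σ.
Proof.
  intros [d H]. rewrite lab_snoc in H. destruct (lab c0 σ) as [d0|] eqn:E; [|discriminate].
  exists d0; split; auto. exists b, d; auto.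
Qed.

Lemma valid_prefix σ ρ : valid (σ ++ ρ) -> valid σ.
Proof.
  intros [d H]. destruct (lab c0 σ) eqn:E; [eexists; eauto|].
  rewrite lab_app_none in H; [discriminate|auto].
Qed.

Lemma live_valid τ : live τ -> valid τ.
Proof. intros [d [H _]]; exists d; auto. Qed.

Lemma present_root h : 0 <= h -> present [] h.
Proof. intros H. split; [apply valid_nil|]. split; [left; auto|right; apply live_nil]. Qed.

Lemma present_gp τ h : present τ h -> gp τ h.
Proof. intros [_ [H _]]; auto. Qed.

Lemma S_mult' τ : exists m, S τ = Q τ * m /\ 0 <= m.
Proof.
  destruct τ as [|b σ] using rev_ind; [exists 0; rewrite S_nil; lia|].
  exists ((S σ + 1) * (Q σ - A σ)). split; [apply S_mult|].
  pose proof (S_ge σ). pose proof (Q_ge σ). pose proof (A_ge σ). nia.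
Qed.

Lemma U_root_next τ : U τ (S τ + 1) = U τ (S τ).
Proof.
  rewrite !U_ray by lia. destruct (S_mult' τ) as [m [Hm Hm0]]. rewrite Hm.
  pose proof (Q_ge τ). pose proof (A_ge τ).
  rewrite lattice_div by nia. rewrite <- (Z.add_0_r (Q τ * m)). rewrite lattice_div by nia. reflexivity.
Qed.

Lemma U_branch_next σ b t : 0 <= t <= 7 -> U σ (Hb (σ ++ [b]) + t) = Ubr (σ ++ [b]).
Proof.
  intros Ht. pose proof (Hb_gt_S σ b). rewrite U_ray by lia. rewrite Hb_mult.
  pose proof (Q_ge σ). pose proof (A_ge σ). rewrite lattice_div by nia.
  rewrite <- (branch_U σ b). rewrite Hb_mult.
  set (X := (S σ + 1) * (Q (σ ++ [b]) - A (σ ++ [b]))).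
  replace (Q σ * X * A σ) with ((X * A σ) * Q σ) by ring.
  rewrite Z.div_mul by lia. reflexivity.
Qed.

Lemma U_child_first σ b : U (σ ++ [b]) (Hb (σ ++ [b]) + 1) = Ubr (σ ++ [b]) + 1.
Proof. pose proof (S_gt_Hb σ b). rewrite U_conn by lia. ring. Qed.

Lemma INC τ h : gp τ h -> U τ (h + 1) = U τ h \/ U τ (h + 1) = U τ h + 1.
Proof.
  intros Hg. pose proof (gp_nonneg _ _ Hg) as Hh.
  destruct (Z.lt_ge_cases (h + 1) (S τ)) as [H1|H1].
  - right. rewrite !U_conn by lia. ring.
  - destruct (Z.eq_dec (h + 1) (S τ)) as [H2|H2].
    + right. destruct τ as [|b σ] using rev_ind; [rewrite S_nil in H2; lia|].
      rewrite (U_conn _ h) by lia. rewrite H2. rewrite (U_ray _ (S _)) by lia. rewrite root_U. lia.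
    + rewrite !U_ray by lia. pose proof (Q_pos τ). pose proof (Q_ge τ). pose proof (A_ge τ).
      set (q := Q τ) in *. set (a := A τ) in *.
      pose proof (Z.div_mod (h * a) q ltac:(lia)). pose proof (Z.mod_pos_bound (h * a) q ltac:(lia)).
      pose proof (Z.div_mod ((h + 1) * a) q ltac:(lia)). pose proof (Z.mod_pos_bound ((h + 1) * a) q ltac:(lia)).
      assert (h * a / q <= (h + 1) * a / q) by (apply Z.div_le_mono; nia).
      assert ((h + 1) * a / q <= h * a / q + 1); [|lia].
      assert (q * ((h + 1) * a / q) < q * (h * a / q + 2)) by nia. nia.
Qed.

Definition vtx := (list nat * Z)%type.

Definition succ (v v' : vtx) : Prop :=
  present (fst v) (snd v) /\ present (fst v') (snd v') /\ snd v' = snd v + 1 /\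
  (fst v' = fst v \/ exists b, fst v' = fst v ++ [b] /\ snd v = Hb (fst v')).

Definition Uv (v : vtx) := U (fst v) (snd v).

Lemma succ_U v v' : succ v v' -> Uv v' = Uv v \/ Uv v' = Uv v + 1.
Proof.
  destruct v as [τ h], v' as [τ' h']. unfold succ, Uv; simpl.
  intros (P1 & P2 & -> & [->|[b [-> ->]]]).
  - apply INC. apply P1.
  - right. rewrite U_child_first. pose proof (U_branch_next τ b 0 ltac:(lia)) as X.
    rewrite Z.add_0_r in X. rewrite X. reflexivity.
Qed.

Lemma present_prev τ h : present τ (h + 1) -> gp τ h -> present τ h.
Proof. intros [V [G L]] Hg. split; auto. split; auto. destruct L; [left; lia|right; auto]. Qed.

Lemma U_child_next σ b : U (σ ++ [b]) (Hb (σ ++ [b]) + 2) = U (σ ++ [b]) (Hb (σ ++ [b]) + 1) + 1.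
Proof. pose proof (S_gt_Hb σ b). rewrite !U_conn by lia. ring. Qed.

Lemma present_parent σ b h : valid (σ ++ [b]) -> Hb (σ ++ [b]) <= h -> present σ h.
Proof.
  intros V Hh. pose proof (Hb_gt_S σ b). pose proof (S_ge σ). split; [eapply valid_prefix; eauto|]. split.
  - destruct (list_eq_dec Nat.eq_dec σ []) as [E|E]; [left; split; [auto|lia]|].
    right. split; [auto|]. pose proof (S_gtHb' σ E). lia.
  - right. eapply valid_parent; eauto.
Qed.

Lemma adjacency τ1 h τ2 : present τ1 h -> present τ2 (h + 1) ->
  (U τ2 (h + 1) = U τ1 h \/ U τ2 (h + 1) = U τ1 h + 1) -> succ (τ1, h) (τ2, h + 1).
Proof.
  intros P1 P2 Hd. unfold succ; simpl. split; auto. split; auto. split; auto.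
  pose proof (present_gp _ _ P1) as G1. pose proof (present_gp _ _ P2) as G2.
  pose proof (gp_nonneg _ _ G1) as Hh.
  assert (Hc : gp τ2 h \/ (τ2 <> [] /\ Hb τ2 = h)).
  { destruct G2 as [[E _]|[Hn Hl]]; [left; left; auto|].
    destruct (Z.eq_dec (Hb τ2) h); [right; auto| left; right; split; auto; lia]. }
  destruct Hc as [Hg|[Hn Heq]].
  - destruct (list_eq_dec Nat.eq_dec τ1 τ2) as [E|E]; [left; auto|exfalso].
    pose proof (INC τ2 h Hg) as I2.
    destruct (sep τ1 τ2 h G1 Hg E) as [X|[X|[[b (E1 & E2 & E3)]|[b (E1 & E2 & E3)]]]]; try lia.
    + subst τ2. pose proof (U_child_next τ1 b). rewrite <- E2 in H. replace (h+1) with (Hb (τ1 ++ [b]) + 2) in Hd by lia.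
      rewrite H in Hd. rewrite E2 in Hd. replace (Hb (τ1 ++ [b]) + 1) with h in Hd by lia. lia.
    + subst τ1. pose proof (U_branch_next τ2 b 1 ltac:(lia)) as Y1.
      pose proof (U_branch_next τ2 b 2 ltac:(lia)) as Y2.
      rewrite <- E2 in Y1. replace (Hb (τ2 ++ [b]) + 2) with (h + 1) in Y2 by lia. lia.
  - destruct τ2 as [|b σ _] using rev_ind; [congruence|].
    assert (Pσ : present σ h) by (apply present_parent with b; [apply P2|lia]).
    pose proof (U_child_first σ b) as Y1. pose proof (U_branch_next σ b 0 ltac:(lia)) as Y0.
    rewrite Z.add_0_r in Y0. rewrite Heq in Y1, Y0.
    destruct (list_eq_dec Nat.eq_dec τ1 σ) as [->|E]; [right; exists b; auto|exfalso].
    destruct (sep τ1 σ h G1 (present_gp _ _ Pσ) E) as [X|[X|[[b' (E1 & E2 & E3)]|[b' (E1 & E2 & E3)]]]]; try lia.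
    subst τ1. destruct (Nat.lt_total b' b) as [Hl|[Hl|Hl]].
    + pose proof (sib_heights σ b' b Hl). pose proof (S_gt_Hb σ b'). lia.
    + subst b'. destruct G1 as [[E0 _]|[_ HH]]; [destruct σ; discriminate|lia].
    + pose proof (sib_heights σ b b' Hl). pose proof (S_gt_Hb σ b). lia.
Qed.

Lemma vertex_id τ1 τ2 h : present τ1 h -> present τ2 h -> U τ1 h = U τ2 h -> τ1 = τ2.
Proof.
  intros P1 P2 Hu. destruct (list_eq_dec Nat.eq_dec τ1 τ2) as [E|E]; auto.
  destruct (sep τ1 τ2 h (present_gp _ _ P1) (present_gp _ _ P2) E) as [X|[X|[[b (_&_&X)]|[b (_&_&X)]]]]; lia.
Qed.

Lemma pred_ex τ h : present τ h -> (τ, h) <> ([], 0) -> exists τ', succ (τ', h - 1) (τ, h).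
Proof.
  intros P Hn. pose proof (present_gp _ _ P) as G. pose proof (gp_nonneg _ _ G).
  assert (Hc : gp τ (h - 1) \/ (τ <> [] /\ Hb τ = h - 1)).
  { destruct G as [[E _]|[E Hl]].
    - subst τ. left; left; split; auto. destruct (Z.eq_dec h 0); [subst; congruence|lia].
    - destruct (Z.eq_dec (Hb τ) (h - 1)); [right; auto|left; right; split; auto; lia]. }
  destruct Hc as [Hg|[Hne Heq]].
  - exists τ. unfold succ; simpl. split; [apply present_prev; [replace (h - 1 + 1) with h by lia; auto|auto]|].
    split; auto. split; [lia|left; auto].
  - destruct τ as [|b σ _] using rev_ind; [congruence|]. exists σ. unfold succ; simpl.
    split; [apply present_parent with b; [apply P|lia]|]. split; auto. split; [lia|].
    right. exists b. split; auto.
Qed.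

Definition anc (u w : vtx) := present (fst u) (snd u) /\ present (fst w) (snd w) /\
  ((fst u = fst w /\ snd u <= snd w) \/
   (exists b ρ, fst w = fst u ++ b :: ρ /\ snd u <= Hb (fst u ++ [b]))).

Lemma anc_refl v : present (fst v) (snd v) -> anc v v.
Proof. intros P. split; auto. split; auto. left; split; auto; lia. Qed.

Lemma snoc_split (σ τ : list nat) c ρ b : σ ++ c :: ρ = τ ++ [b] ->
  (ρ = [] /\ σ = τ /\ c = b) \/ (exists ρ', ρ = ρ' ++ [b] /\ τ = σ ++ c :: ρ').
Proof.
  destruct ρ as [|x ρ' _] using rev_ind; intros H.
  - left. apply app_inj_tail in H. destruct H; subst; auto.
  - right. rewrite app_comm_cons, app_assoc in H. apply app_inj_tail in H.
    destruct H as [H1 H2]; subst. exists ρ'; auto.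
Qed.

Lemma anc_succ u w w' : succ w w' -> (anc u w' <-> anc u w \/ u = w').
Proof.
  destruct u as [σ g], w as [τ h], w' as [τ' h']. unfold succ; simpl.
  intros (P & P' & -> & [->|[b [-> Hh]]]); unfold anc; simpl.
  - split.
    + intros (Pu & _ & [[-> Hg]|[c [ρ [E Hg]]]]).
      * destruct (Z.eq_dec g (h + 1)) as [->|Hne]; [right; auto|].
        left. split; auto. split; auto. left; split; auto; lia.
      * left. split; auto. split; auto. right. eauto.
    + intros [(Pu & _ & [[-> Hg]|[c [ρ [E Hg]]]])|E].
      * split; auto. split; auto. left; split; auto; lia.
      * split; auto. split; auto. right; eauto.
      * inversion E; subst. split; auto. split; auto. left; split; auto; lia.
  - split.
    + intros (Pu & _ & [[-> Hg]|[c [ρ [E Hg]]]]).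
      * right. destruct Pu as [_ [[[E _]|[_ Hl]] _]]; [destruct τ; discriminate|]. f_equal. lia.
      * left. split; auto. split; auto.
        destruct (snoc_split _ _ _ _ _ (eq_sym E)) as [(-> & -> & ->)|[ρ' [-> ->]]].
        -- left; split; auto. lia.
        -- right; eauto.
    + intros [(Pu & _ & [[-> Hg]|[c [ρ [E Hg]]]])|E].
      * split; auto. split; auto. right. exists b, []. split; auto. lia.
      * split; auto. split; auto. right. exists c, (ρ ++ [b]). split; auto.
        rewrite E. rewrite <- app_assoc. reflexivity.
      * inversion E; subst. split; auto. split; auto. left; split; auto; lia.
Qed.

Lemma anc_height u w : anc u w -> snd u <= snd w /\ (snd u = snd w -> u = w).
Proof.
  destruct u as [σ g], w as [τ h]. unfold anc; simpl. intros (Pu & Pw & [[-> Hg]|[c [ρ [E Hg]]]]).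
  - split; auto. intros ->; auto.
  - pose proof (Hb_first σ c ρ) as HF. rewrite <- E in HF.
    destruct Pw as [_ [[[E' _]|[_ Hl]] _]]; [rewrite E in E'; destruct σ; discriminate|]. split; [lia|intros; lia].
Qed.

Definition reach := clos_trans vtx succ.

Lemma succ_height v v' : succ v v' -> snd v' = snd v + 1.
Proof. intros (_ & _ & H & _); auto. Qed.

Lemma reach_anc u v : reach u v -> anc u v /\ u <> v.
Proof.
  intros H. apply clos_trans_tn1_iff in H. induction H as [v Hs|v w Hs Hr IH].
  - split.
    + apply (proj2 (anc_succ u u v Hs)). left. apply anc_refl. apply Hs.
    + intros ->. pose proof (succ_height _ _ Hs). lia.
  - destruct IH as [IH1 IH2]. split.
    + apply (proj2 (anc_succ u v w Hs)). left; auto.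
    + intros ->. pose proof (succ_height _ _ Hs). pose proof (anc_height _ _ IH1). lia.
Qed.

Lemma anc_reach u v : anc u v -> u <> v -> reach u v.
Proof.
  destruct v as [τ h]. intros Ha. remember (Z.to_nat (h - snd u)) as n eqn:En.
  revert τ h Ha En. induction n as [|n IH]; intros τ h Ha En Hne.
  - pose proof (anc_height _ _ Ha) as [H1 H2]. simpl in *. exfalso. apply Hne. apply H2. lia.
  - pose proof (anc_height _ _ Ha) as [H1 H2]. simpl in *.
    assert (Hlt : snd u < h) by (destruct (Z.eq_dec (snd u) h); [exfalso; apply Hne; auto|lia]).
    destruct Ha as [Pu [Pw Hr]] eqn:EHa. simpl in Pw.
    assert (Hn0 : (τ, h) <> ([], 0)).
    { intros E; inversion E; subst. destruct Pu as [_ [G _]]. pose proof (gp_nonneg _ _ G). lia. }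
    destruct (pred_ex τ h Pw Hn0) as [τ' Hs].
    pose proof (proj1 (anc_succ u _ _ Hs) Ha) as [Hp|E].
    + destruct (classic (u = (τ', h - 1))) as [->|Hne'].
      * apply t_step. auto.
      * eapply t_trans; [apply (IH τ' (h - 1)); auto; simpl; lia|]. apply t_step; auto.
    + contradiction.
Qed.


Definition dec (P : Prop) : {P} + {~ P} := excluded_middle_informative P.

Definition bking := mkPiece Black King.
Definition bpawn := mkPiece Black Pawn.
Definition rpawn := mkPiece Red Pawn.

Definition fuelsq (k x y : Z) : option piece :=
  if dec (exists j, k <= j /\ x = -12 - 2 * j /\ y = 2 * j) then Some bpawn
  else if dec ((exists j, 0 <= j < k /\ x = -12 - 2 * j /\ y = 2 * j) \/ (x = -11 - 2 * k /\ y = 2 * k - 1))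
       then None else Some rpawn.

Definition treeK (x y : Z) := exists τ h, present τ h /\ x = 4 * U τ h - 2 * h /\ y = 2 * h.

Definition Pedge (h u u' : Z) : Z * Z :=
  if u' =? u + 1 then (4 * u - 2 * h + 1, 2 * h + 1) else (4 * u - 2 * h - 1, 2 * h + 1).

Definition consumed (w : vtx) (x y : Z) :=
  exists v v', anc v' w /\ succ v v' /\ (x, y) = Pedge (snd v) (Uv v) (Uv v').

Definition deco (x y : Z) :=
  exists τ, τ <> [] /\ live τ /\ x = 4 * U τ (S τ) - 2 * S τ + 1 /\ y = 2 * S τ + 1.

Definition Kx (v : vtx) := 4 * Uv v - 2 * snd v.
Definition Ky (v : vtx) := 2 * snd v.

Definition bd (w : vtx) (k : Z) : board := fun x y =>
  if Z.odd (x + y) then None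
  else if Z_le_dec (x + y) (-8) then fuelsq k x y
  else if dec (treeK x y) then (if dec (x = Kx w /\ y = Ky w) then Some bking else None)
  else if dec (consumed w x y) then None
  else if dec (deco x y) then None
  else Some rpawn.

Lemma bd_zone w k x y : Z.odd (x + y) = false -> x + y <= -8 -> bd w k x y = fuelsq k x y.
Proof. intros H1 H2. unfold bd. rewrite H1. destruct (Z_le_dec (x + y) (-8)); [reflexivity|lia]. Qed.

Lemma bd_odd w k x y : Z.odd (x + y) = true -> bd w k x y = None.
Proof. intros H. unfold bd. rewrite H. reflexivity. Qed.

Lemma bd_tree w k x y : Z.odd (x + y) = false -> -8 < x + y -> treeK x y ->
  bd w k x y = if dec (x = Kx w /\ y = Ky w) then Some bking else None.
Proof.
  intros H1 H2 H3. unfold bd. rewrite H1. destruct (Z_le_dec (x + y) (-8)); [lia|].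
  destruct (dec (treeK x y)); [reflexivity|contradiction].
Qed.

Lemma bd_nontree w k x y : Z.odd (x + y) = false -> -8 < x + y -> ~ treeK x y ->
  bd w k x y = if dec (consumed w x y) then None else if dec (deco x y) then None else Some rpawn.
Proof.
  intros H1 H2 H3. unfold bd. rewrite H1. destruct (Z_le_dec (x + y) (-8)); [lia|].
  destruct (dec (treeK x y)); [contradiction|reflexivity].
Qed.

Lemma odd_y_not_tree x y : Z.odd y = true -> ~ treeK x y.
Proof.
  intros H [τ [h [_ [_ ->]]]]. rewrite Z.odd_mul in H. simpl in H. discriminate.
Qed.

Lemma Pedge_y h u u' : snd (Pedge h u u') = 2 * h + 1.
Proof. unfold Pedge. destruct (u' =? u + 1); reflexivity. Qed.

Lemma odd21 h : Z.odd (2 * h + 1) = true.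
Proof. rewrite Z.odd_add, Z.odd_mul. reflexivity. Qed.

Lemma consumed_odd w x y : consumed w x y -> Z.odd y = true.
Proof.
  intros (v & v' & _ & _ & E). pose proof (Pedge_y (snd v) (Uv v) (Uv v')) as Hy.
  rewrite <- E in Hy. simpl in Hy. subst y. apply odd21.
Qed.

Lemma deco_odd x y : deco x y -> Z.odd y = true.
Proof. intros (τ & _ & _ & _ & ->). apply odd21. Qed.

Lemma even_xy_K v : Z.odd (Kx v + Ky v) = false.
Proof. unfold Kx, Ky. replace (4 * Uv v - 2 * snd v + 2 * snd v) with (2 * (2 * Uv v)) by ring.
  rewrite Z.odd_mul. reflexivity. Qed.

Lemma Uv_nonneg v : present (fst v) (snd v) -> 0 <= Uv v.
Proof. intros P. apply U_nonneg. apply P. Qed.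

Lemma treeK_v v : present (fst v) (snd v) -> treeK (Kx v) (Ky v).
Proof. intros P. exists (fst v), (snd v). split; auto. Qed.

Lemma K_inj v v' : present (fst v) (snd v) -> present (fst v') (snd v') ->
  Kx v = Kx v' -> Ky v = Ky v' -> v = v'.
Proof.
  destruct v as [τ h], v' as [τ' h']. unfold Kx, Ky, Uv; cbn [fst snd]. intros P P' E1 E2.
  assert (h = h') by lia. subst h'. assert (U τ h = U τ' h) by lia.
  f_equal. eapply vertex_id; eauto.
Qed.

Lemma bd_king w k : present (fst w) (snd w) -> bd w k (Kx w) (Ky w) = Some bking.
Proof.
  intros P. pose proof (Uv_nonneg w P). rewrite bd_tree.
  - destruct (dec (Kx w = Kx w /\ Ky w = Ky w)) as [_|n]; [reflexivity|tauto].
  - apply even_xy_K.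
  - unfold Kx, Ky. lia.
  - apply treeK_v; auto.
Qed.

Lemma bd_tree_other w k v : present (fst v) (snd v) -> present (fst w) (snd w) -> v <> w ->
  bd w k (Kx v) (Ky v) = None.
Proof.
  intros P Pw Hne. pose proof (Uv_nonneg v P). rewrite bd_tree.
  - destruct (dec (Kx v = Kx w /\ Ky v = Ky w)) as [[E1 E2]|n]; [|reflexivity].
    exfalso. apply Hne. apply K_inj; auto.
  - apply even_xy_K.
  - unfold Kx, Ky. lia.
  - apply treeK_v; auto.
Qed.

Lemma Pedge_inj h u u' h2 u2 u2' :
  (u' = u \/ u' = u + 1) -> (u2' = u2 \/ u2' = u2 + 1) ->
  Pedge h u u' = Pedge h2 u2 u2' -> h = h2 /\ u = u2 /\ u' = u2'.
Proof.
  intros H1 H2. unfold Pedge.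
  destruct (Z.eqb_spec u' (u + 1)), (Z.eqb_spec u2' (u2 + 1)); intros E; apply pair_equal_spec in E; destruct E as [E1 E2].
  all: lia.
Qed.

Lemma succ_unique_pred a b v : succ a v -> succ b v -> a = b.
Proof.
  destruct a as [τa ha], b as [τb hb], v as [τ h]. unfold succ; cbn [fst snd].
  intros (Pa & Pv & Ha & Ea) (Pb & _ & Hb' & Eb).
  assert (ha = hb) by lia. subst hb.
  destruct Ea as [->|[c [-> Hc]]], Eb as [E|[c' [E Hc']]].
  - subst; reflexivity.
  - exfalso. destruct Pa as [_ [[[E1 _]|[_ Hl]] _]].
    + rewrite E1 in E. destruct τb; discriminate.
    + lia.
  - exfalso. destruct Pb as [_ [[[E1 _]|[_ Hl]] _]].
    + rewrite E1 in E. destruct τa; discriminate.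
    + subst τb; lia.
  - apply app_inj_tail in E. destruct E as [-> ->]. reflexivity.
Qed.

Lemma succ_present1 v v' : succ v v' -> present (fst v) (snd v).
Proof. intros (P & _); auto. Qed.
Lemma succ_present2 v v' : succ v v' -> present (fst v') (snd v').
Proof. intros (_ & P & _); auto. Qed.

Lemma succ_U' v v' : succ v v' -> Uv v' = Uv v \/ Uv v' = Uv v + 1.
Proof. apply succ_U. Qed.

Lemma consumed_new w v : succ w v -> consumed v (fst (Pedge (snd w) (Uv w) (Uv v))) (snd (Pedge (snd w) (Uv w) (Uv v))).
Proof.
  intros Hs. exists w, v. split; [apply anc_refl; eapply succ_present2; eauto|]. split; auto.
  destruct (Pedge _ _ _); reflexivity.
Qed.

Lemma anc_present2 u w : anc u w -> present (fst w) (snd w).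
Proof. intros (_ & P & _); auto. Qed.
Lemma anc_present1 u w : anc u w -> present (fst u) (snd u).
Proof. intros (P & _ & _); auto. Qed.

Lemma vertex_id' v v' : present (fst v) (snd v) -> present (fst v') (snd v') ->
  snd v = snd v' -> Uv v = Uv v' -> v = v'.
Proof.
  destruct v as [τ h], v' as [τ' h']. unfold Uv; cbn [fst snd]. intros P P' -> E.
  f_equal. eapply vertex_id; eauto.
Qed.

Lemma consumed_not_next w v : succ w v -> ~ consumed w (fst (Pedge (snd w) (Uv w) (Uv v))) (snd (Pedge (snd w) (Uv w) (Uv v))).
Proof.
  intros Hs (a & b & Hanc & Hab & E).
  assert (E' : Pedge (snd w) (Uv w) (Uv v) = Pedge (snd a) (Uv a) (Uv b)).
  { rewrite <- E. destruct (Pedge _ _ _); reflexivity. }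
  pose proof (succ_U' _ _ Hs) as U1. pose proof (succ_U' _ _ Hab) as U2.
  destruct (Pedge_inj _ _ _ _ _ _ U1 U2 E') as (H1 & H2 & H3).
  pose proof (succ_height _ _ Hs). pose proof (succ_height _ _ Hab).
  assert (b = v).
  { apply vertex_id'; [eapply succ_present2; eauto|eapply succ_present2; eauto|lia|lia]. }
  subst b. pose proof (anc_height _ _ Hanc). lia.
Qed.

Lemma consumed_succ w v x y : succ w v ->
  (consumed v x y <-> consumed w x y \/ (x, y) = Pedge (snd w) (Uv w) (Uv v)).
Proof.
  intros Hs. split.
  - intros (a & b & Hanc & Hab & E). apply (anc_succ _ _ _ Hs) in Hanc. destruct Hanc as [Hanc| ->].
    + left. exists a, b. auto.
    + right. rewrite (succ_unique_pred a w v Hab Hs) in E. auto.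
  - intros [(a & b & Hanc & Hab & E)|E].
    + exists a, b. split; auto. apply (anc_succ _ _ _ Hs). left; auto.
    + exists w, v. split; [apply anc_refl; eapply succ_present2; eauto|]. auto.
Qed.

Lemma consumed_pred a w : succ a w -> consumed w (fst (Pedge (snd a) (Uv a) (Uv w))) (snd (Pedge (snd a) (Uv a) (Uv w))).
Proof. apply consumed_new. Qed.

Lemma live_root_present τ : τ <> [] -> live τ -> present τ (S τ).
Proof.
  intros Hn Hl. split; [apply live_valid; auto|]. split; [right; split; auto; pose proof (S_gtHb' τ Hn); lia|].
  left; lia.
Qed.

Lemma live_root_succ τ v : τ <> [] -> succ (τ, S τ) v -> Uv v = U τ (S τ).
Proof.
  intros Hn. destruct v as [τ' h']. unfold succ, Uv; cbn [fst snd].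
  intros (P & P' & -> & [->|[b [-> Hh]]]).
  - apply U_root_next.
  - exfalso. pose proof (Hb_gt_S τ b). lia.
Qed.

Lemma deco_vertex x y v u' : present (fst v) (snd v) -> (u' = Uv v \/ u' = Uv v + 1) ->
  deco x y -> (x, y) = Pedge (snd v) (Uv v) u' ->
  fst v <> [] /\ live (fst v) /\ snd v = S (fst v) /\ u' = Uv v + 1.
Proof.
  intros P Hu (τ & Hn & Hl & Ex & Ey) E. unfold Pedge in E.
  destruct (Z.eqb_spec u' (Uv v + 1)) as [H|H]; apply pair_equal_spec in E; destruct E as [E1 E2]; subst x y.
  - assert (Hh : snd v = S τ) by lia.
    assert (Hu' : Uv v = U τ (S τ)) by lia.
    assert (fst v = τ).
    { unfold Uv in Hu'. rewrite Hh in Hu', P. eapply vertex_id; eauto. apply live_root_present; auto. }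
    subst τ. auto.
  - lia.
Qed.

Lemma dir_cases d : (dx d = 1 /\ dy d = 1) \/ (dx d = -1 /\ dy d = 1) \/ (dx d = 1 /\ dy d = -1) \/ (dx d = -1 /\ dy d = -1).
Proof. destruct d; simpl; tauto. Qed.

Lemma Pedge_up w v d : succ w v -> Kx v = Kx w + 2 * dx d -> dy d = 1 ->
  Pedge (snd w) (Uv w) (Uv v) = (Kx w + dx d, Ky w + 1).
Proof.
  intros Hs Hx Hy. pose proof (succ_height _ _ Hs) as Hh. unfold Kx, Ky in *. rewrite Hh in Hx.
  unfold Pedge. destruct (dir_cases d) as [[E1 E2]|[[E1 E2]|[[E1 E2]|[E1 E2]]]]; try lia.
  - rewrite E1 in *. assert (Uv v = Uv w + 1) by lia. rewrite H, Z.eqb_refl. f_equal; lia.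
  - rewrite E1 in *. assert (Uv v = Uv w) by lia. rewrite H.
    replace (Uv w =? Uv w + 1) with false by (symmetry; apply Z.eqb_neq; lia). f_equal; lia.
Qed.

Lemma Pedge_down v w d : succ v w -> Kx v = Kx w + 2 * dx d -> dy d = -1 ->
  Pedge (snd v) (Uv v) (Uv w) = (Kx w + dx d, Ky w - 1).
Proof.
  intros Hs Hx Hy. pose proof (succ_height _ _ Hs) as Hh. unfold Kx, Ky in *. rewrite Hh in *.
  unfold Pedge. destruct (dir_cases d) as [[E1 E2]|[[E1 E2]|[[E1 E2]|[E1 E2]]]]; try lia.
  - rewrite E1 in *. assert (Uv w = Uv v) by lia. rewrite H.
    replace (Uv v =? Uv v + 1) with false by (symmetry; apply Z.eqb_neq; lia). f_equal; lia.
  - rewrite E1 in *. assert (Uv w = Uv v + 1) by lia. rewrite H, Z.eqb_refl. f_equal; lia.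
Qed.

Lemma Pedge_sum h u u' : (u' = u \/ u' = u + 1) -> fst (Pedge h u u') + snd (Pedge h u u') = 4 * u + 2 \/
  fst (Pedge h u u') + snd (Pedge h u u') = 4 * u.
Proof. intros _. unfold Pedge. destruct (u' =? u + 1); simpl; lia. Qed.

Lemma bd_P_red w k x y : Z.odd (x + y) = false -> -8 < x + y -> Z.odd y = true ->
  ~ consumed w x y -> ~ deco x y -> bd w k x y = Some rpawn.
Proof.
  intros H1 H2 H3 H4 H5. rewrite bd_nontree; auto; [|apply odd_y_not_tree; auto].
  destruct (dec (consumed w x y)); [contradiction|]. destruct (dec (deco x y)); [contradiction|reflexivity].
Qed.

Lemma bd_P_cons w k x y : Z.odd (x + y) = false -> -8 < x + y -> Z.odd y = true ->
  consumed w x y -> bd w k x y = None.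
Proof.
  intros H1 H2 H3 H4. rewrite bd_nontree; auto; [|apply odd_y_not_tree; auto].
  destruct (dec (consumed w x y)); [reflexivity|contradiction].
Qed.

Lemma bd_even_nontree w k x y : Z.odd (x + y) = false -> -8 < x + y -> Z.odd y = false ->
  ~ treeK x y -> bd w k x y = Some rpawn.
Proof.
  intros H1 H2 H3 H4. rewrite bd_nontree; auto.
  destruct (dec (consumed w x y)) as [c|_]; [apply consumed_odd in c; congruence|].
  destruct (dec (deco x y)) as [c|_]; [apply deco_odd in c; congruence|reflexivity].
Qed.

Lemma odd_even_y h a : Z.odd (2 * h + 2 * a) = false.
Proof. replace (2 * h + 2 * a) with (2 * (h + a)) by ring. rewrite Z.odd_mul. reflexivity. Qed.

Lemma J_up w k d : present (fst w) (snd w) -> dy d = 1 ->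
  (jump_ok bking (bd w k, Kx w, Ky w) d <-> exists v, succ w v /\ Kx v = Kx w + 2 * dx d /\ Ky v = Ky w + 2).
Proof.
  intros Pw Hy. pose proof (Uv_nonneg w Pw) as HU. unfold jump_ok. rewrite Hy. split.
  - intros (_ & _ & HL).
    assert (Hdx : dx d = 1 \/ dx d = -1) by (destruct (dir_cases d); lia).
    assert (Hev : Z.odd (Kx w + 2 * dx d + (Ky w + 2 * 1)) = false).
    { unfold Kx, Ky. replace (4 * Uv w - 2 * snd w + 2 * dx d + (2 * snd w + 2 * 1)) with (2 * (2 * Uv w + dx d + 1)) by ring.
      rewrite Z.odd_mul. reflexivity. }
    destruct (classic (treeK (Kx w + 2 * dx d) (Ky w + 2 * 1))) as [T|T].
    + destruct T as (τ' & h' & P' & Ex & Ey). unfold Ky in Ey. assert (h' = snd w + 1) by lia. subst h'.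
      exists (τ', snd w + 1). destruct w as [τ h]. cbn [fst snd] in *.
      assert (Hs : succ (τ, h) (τ', h + 1)).
      { apply adjacency; auto. unfold Kx, Uv in Ex; cbn [fst snd] in Ex. destruct Hdx; [right|left]; lia. }
      split; [exact Hs|]. unfold Kx, Ky, Uv in *; cbn [fst snd] in *. split; lia.
    + rewrite bd_even_nontree in HL; [discriminate|exact Hev| | |exact T].
      * unfold Kx, Ky. destruct Hdx; lia.
      * unfold Ky. replace (2 * snd w + 2 * 1) with (2 * (snd w + 1)) by ring. rewrite Z.odd_mul. reflexivity.
  - intros (v & Hs & Hx & Hv). split; [exact I|]. split.
    + exists rpawn. split; [|simpl; congruence].
      pose proof (Pedge_up w v d Hs Hx Hy) as PE.
      pose proof (succ_U' _ _ Hs) as HUv.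
      assert (Hdx : dx d = 1 \/ dx d = -1) by (destruct (dir_cases d); lia).
      apply bd_P_red.
      * unfold Kx, Ky. replace (4 * Uv w - 2 * snd w + dx d + (2 * snd w + 1)) with (4 * Uv w + dx d + 1) by ring.
        destruct Hdx as [-> | ->]; [replace (4 * Uv w + 1 + 1) with (2 * (2 * Uv w + 1)) by ring
                                   |replace (4 * Uv w + -1 + 1) with (2 * (2 * Uv w)) by ring]; rewrite Z.odd_mul; reflexivity.
      * unfold Kx, Ky. destruct Hdx; lia.
      * unfold Ky. apply odd21.
      * intros C. apply (consumed_not_next w v Hs). rewrite PE. exact C.
      * intros C. destruct (deco_vertex _ _ w (Uv v) Pw HUv C (eq_sym PE)) as (Hn & Hl & Hr & Hu).
        destruct w as [τ h]. cbn [fst snd] in *. subst h.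
        pose proof (live_root_succ τ v Hn Hs). unfold Uv in *; cbn [fst snd] in *. lia.
    + replace (Kx w + 2 * dx d) with (Kx v) by lia. replace (Ky w + 2 * 1) with (Ky v) by lia.
      apply bd_tree_other; [eapply succ_present2; eauto|auto|].
      intros ->. pose proof (succ_height _ _ Hs). lia.
Qed.

Lemma J_down w k d : present (fst w) (snd w) -> dy d = -1 -> ~ jump_ok bking (bd w k, Kx w, Ky w) d.
Proof.
  intros Pw Hy. pose proof (Uv_nonneg w Pw) as HU. unfold jump_ok. rewrite Hy.
  intros (_ & (e & He & _) & HL).
  assert (Hdx : dx d = 1 \/ dx d = -1) by (destruct (dir_cases d); lia).
  destruct (classic (treeK (Kx w + 2 * dx d) (Ky w + 2 * -1))) as [T|T].
  - destruct T as (τ' & h' & P' & Ex & Ey). unfold Ky in Ey. assert (h' = snd w - 1) by lia. subst h'.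
    destruct w as [τ h]. cbn [fst snd] in *.
    assert (Hs : succ (τ', h - 1) (τ, h)).
    { replace h with (h - 1 + 1) at 2 by lia. apply adjacency; auto.
      - replace (h - 1 + 1) with h by lia. auto.
      - replace (h - 1 + 1) with h by lia. unfold Kx, Uv in Ex; cbn [fst snd] in Ex. destruct Hdx; [left|right]; lia. }
    pose proof (Pedge_down (τ', h - 1) (τ, h) d Hs) as PD.
    assert (Kx (τ', h - 1) = Kx (τ, h) + 2 * dx d) by (unfold Kx, Uv in *; cbn [fst snd] in *; lia).
    specialize (PD H Hy).
    rewrite bd_P_cons in He; [discriminate| | | |].
    + unfold Kx, Ky, Uv; cbn [fst snd]. replace (4 * U τ h - 2 * h + dx d + (2 * h + -1)) with (4 * U τ h + dx d - 1) by ring.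
      destruct Hdx as [-> | ->]; [replace (4 * U τ h + 1 - 1) with (2 * (2 * U τ h)) by ring
                                 |replace (4 * U τ h + -1 - 1) with (2 * (2 * U τ h - 1)) by ring]; rewrite Z.odd_mul; reflexivity.
    + unfold Kx, Ky, Uv in *; cbn [fst snd] in *. destruct Hdx; lia.
    + unfold Ky; cbn [snd]. replace (2 * h + -1) with (2 * (h - 1) + 1) by ring. apply odd21.
    + pose proof (consumed_pred _ _ Hs) as C. rewrite PD in C. cbn [fst snd] in C.
      replace (Ky (τ, h) + dy d) with (Ky (τ, h) - 1) by lia. exact C.
  - rewrite bd_even_nontree in HL; [discriminate| | | |auto].
    + unfold Kx, Ky. replace (4 * Uv w - 2 * snd w + 2 * dx d + (2 * snd w + 2 * -1)) with (2 * (2 * Uv w + dx d - 1)) by ring.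
      rewrite Z.odd_mul. reflexivity.
    + unfold Kx, Ky. destruct Hdx; lia.
    + unfold Ky. replace (2 * snd w + 2 * -1) with (2 * (snd w - 1)) by ring. rewrite Z.odd_mul. reflexivity.
Qed.

Lemma bd_agree w v k x y : succ w v -> ~ (x = Kx w /\ y = Ky w) -> ~ (x = Kx v /\ y = Ky v) ->
  (x, y) <> Pedge (snd w) (Uv w) (Uv v) -> bd w k x y = bd v k x y.
Proof.
  intros Hs H1 H2 H3. unfold bd.
  destruct (Z.odd (x + y)); auto. destruct (Z_le_dec (x + y) (-8)); auto.
  destruct (dec (treeK x y)).
  - destruct (dec (x = Kx w /\ y = Ky w)); [contradiction|]. destruct (dec (x = Kx v /\ y = Ky v)); [contradiction|auto].
  - pose proof (consumed_succ w v x y Hs) as C.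
    destruct (dec (consumed w x y)) as [c1|c1], (dec (consumed v x y)) as [c2|c2]; auto.
    + exfalso. apply c2. apply C. left; auto.
    + exfalso. apply C in c2. destruct c2; contradiction.
Qed.

Lemma succ_dir w v : succ w v -> exists d, dy d = 1 /\ Kx v = Kx w + 2 * dx d /\ Ky v = Ky w + 2.
Proof.
  intros Hs. pose proof (succ_height _ _ Hs) as Hh. pose proof (succ_U' _ _ Hs) as HU.
  unfold Kx, Ky. rewrite Hh. destruct HU as [E|E].
  - exists NW. cbn [dx dy]. split; auto. split; lia.
  - exists NE. cbn [dx dy]. split; auto. split; lia.
Qed.

Lemma J_step w v k d : succ w v -> Kx v = Kx w + 2 * dx d -> Ky v = Ky w + 2 * dy d ->
  jump_step bking (bd w k, Kx w, Ky w) d = (bd v k, Kx v, Ky v).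
Proof.
  intros Hs Hx Hy. pose proof (succ_height _ _ Hs) as Hh.
  assert (Hdy : dy d = 1) by (unfold Ky in Hy; lia).
  pose proof (Pedge_up w v d Hs Hx Hdy) as PE.
  pose proof (succ_present1 _ _ Hs) as Pw. pose proof (succ_present2 _ _ Hs) as Pv.
  pose proof (Uv_nonneg w Pw) as HU.
  assert (Hdx : dx d = 1 \/ dx d = -1) by (destruct (dir_cases d); lia).
  unfold jump_step. rewrite Hx, Hy. f_equal. f_equal.
  apply functional_extensionality; intros x. apply functional_extensionality; intros y.
  unfold upd.
  destruct ((x =? Kx w + 2 * dx d) && (y =? Ky w + 2 * dy d))%bool eqn:E1.
  { apply andb_true_iff in E1. destruct E1 as [E1 E2]. apply Z.eqb_eq in E1, E2.
    rewrite <- Hx in E1. rewrite <- Hy in E2. subst. rewrite bd_king; auto. }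
  destruct ((x =? Kx w + dx d) && (y =? Ky w + dy d))%bool eqn:E2.
  { apply andb_true_iff in E2. destruct E2 as [E2 E3]. apply Z.eqb_eq in E2, E3. subst x y.
    rewrite Hdy in *. symmetry. apply bd_P_cons.
    - unfold Kx, Ky. replace (4 * Uv w - 2 * snd w + dx d + (2 * snd w + 1)) with (4 * Uv w + dx d + 1) by ring.
      destruct Hdx as [-> | ->]; [replace (4 * Uv w + 1 + 1) with (2 * (2 * Uv w + 1)) by ring
                                 |replace (4 * Uv w + -1 + 1) with (2 * (2 * Uv w)) by ring]; rewrite Z.odd_mul; reflexivity.
    - unfold Kx, Ky. destruct Hdx; lia.
    - unfold Ky. apply odd21.
    - pose proof (consumed_new w v Hs) as C. rewrite PE in C. exact C. }
  destruct ((x =? Kx w) && (y =? Ky w))%bool eqn:E3.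
  { apply andb_true_iff in E3. destruct E3 as [E3 E4]. apply Z.eqb_eq in E3, E4. subst x y.
    symmetry. apply bd_tree_other; auto. intros ->. lia. }
  apply bd_agree; auto.
  - intros [-> ->]. rewrite !Z.eqb_refl in E3. discriminate.
  - intros [-> ->]. rewrite Hx, Hy, !Z.eqb_refl in E1. discriminate.
  - rewrite PE. intros E. apply pair_equal_spec in E. destruct E as [-> ->]. rewrite Hdy, !Z.eqb_refl in E2. discriminate.
Qed.

Lemma trail_fwd k ds : forall w, present (fst w) (snd w) -> jumps_ok bking (bd w k, Kx w, Ky w) ds ->
  exists v, ((ds = [] /\ v = w) \/ (ds <> [] /\ reach w v)) /\
            jumps_result bking (bd w k, Kx w, Ky w) ds = (bd v k, Kx v, Ky v).
Proof.
  induction ds as [|d ds IH]; intros w Pw H.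
  - exists w. split; [left; auto|reflexivity].
  - destruct H as [J Js].
    destruct (dir_cases d) as [[E1 E2]|[[E1 E2]|[[E1 E2]|[E1 E2]]]];
      try (exfalso; eapply J_down; eauto; fail).
    all: destruct (proj1 (J_up w k d Pw E2) J) as (v1 & Hs & Hx & Hy);
         rewrite (J_step w v1 k d Hs Hx ltac:(rewrite E2; lia)) in Js;
         destruct (IH v1 (succ_present2 _ _ Hs) Js) as (v & Hv & R);
         exists v; split;
         [ right; split; [congruence|]; destruct Hv as [[_ ->]|[_ Hr]]; [apply t_step; auto| eapply t_trans; [apply t_step; eauto|auto]]
         | unfold jumps_result; cbn [fold_left]; rewrite (J_step w v1 k d Hs Hx ltac:(rewrite E2; lia)); exact R ].
Qed.

Lemma trail_bwd k w v : reach w v -> exists ds, ds <> [] /\ jumps_ok bking (bd w k, Kx w, Ky w) ds /\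
  jumps_result bking (bd w k, Kx w, Ky w) ds = (bd v k, Kx v, Ky v).
Proof.
  intros H. apply clos_trans_t1n_iff in H. induction H as [w v Hs|w v1 v Hs Hr IH].
  - destruct (succ_dir w v Hs) as (d & Hd & Hx & Hy). exists [d]. split; [congruence|].
    split.
    + split; [apply (J_up w k d (succ_present1 _ _ Hs) Hd); eauto|exact I].
    + unfold jumps_result; cbn [fold_left]. apply J_step; auto. lia.
  - destruct IH as (ds & Hn & J & R). destruct (succ_dir w v1 Hs) as (d & Hd & Hx & Hy).
    exists (d :: ds). split; [congruence|]. split.
    + split; [apply (J_up w k d (succ_present1 _ _ Hs) Hd); eauto|].
      rewrite (J_step w v1 k d Hs Hx ltac:(lia)). exact J.
    + unfold jumps_result; cbn [fold_left]. rewrite (J_step w v1 k d Hs Hx ltac:(lia)). exact R.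
Qed.

Lemma jiter_inv k w s : present (fst w) (snd w) ->
  (forall n, jump_ok bking (jiter bking (bd w k, Kx w, Ky w) s n) (s n)) ->
  forall n, exists v, present (fst v) (snd v) /\ jiter bking (bd w k, Kx w, Ky w) s n = (bd v k, Kx v, Ky v).
Proof.
  intros Pw Hj n. induction n as [|n IH].
  - exists w. split; auto.
  - destruct IH as (v & Pv & E). simpl. rewrite E. specialize (Hj n). rewrite E in Hj.
    destruct (dir_cases (s n)) as [[E1 E2]|[[E1 E2]|[[E1 E2]|[E1 E2]]]];
      try (exfalso; eapply J_down; eauto; fail).
    all: destruct (proj1 (J_up v k (s n) Pv E2) Hj) as (v1 & Hs & Hx & Hy);
         exists v1; split; [eapply succ_present2; eauto|]; apply J_step; auto; lia.
Qed.

Lemma F_fuel k j : k <= j -> fuelsq k (-12 - 2 * j) (2 * j) = Some bpawn.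
Proof.
  intros H. unfold fuelsq. destruct (dec _) as [_|n]; [reflexivity|]. exfalso; apply n. exists j; auto.
Qed.

Lemma F_hole k j : 0 <= j < k -> fuelsq k (-12 - 2 * j) (2 * j) = None.
Proof.
  intros H. unfold fuelsq. destruct (dec _) as [[j' (H1 & H2 & H3)]|n]; [lia|].
  destruct (dec _) as [_|n']; [reflexivity|]. exfalso; apply n'. left. exists j; auto.
Qed.

Lemma F_arm k : fuelsq k (-11 - 2 * k) (2 * k - 1) = None.
Proof.
  unfold fuelsq. destruct (dec _) as [[j' (H1 & H2 & H3)]|n]; [lia|].
  destruct (dec _) as [_|n']; [reflexivity|]. exfalso; apply n'. right. auto.
Qed.

Lemma F_red k x y : (forall j, ~ (x = -12 - 2 * j /\ y = 2 * j)) -> ~ (x = -11 - 2 * k /\ y = 2 * k - 1) ->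
  fuelsq k x y = Some rpawn.
Proof.
  intros H1 H2. unfold fuelsq. destruct (dec _) as [[j' (_ & E1 & E2)]|n]; [exfalso; apply (H1 j'); auto|].
  destruct (dec _) as [[[j' (_ & E1 & E2)]|E]|_]; [exfalso; apply (H1 j'); auto|contradiction|reflexivity].
Qed.

Lemma F_black k x y e : fuelsq k x y = Some e -> pcol e = Black ->
  exists j, k <= j /\ x = -12 - 2 * j /\ y = 2 * j.
Proof.
  unfold fuelsq. destruct (dec _) as [H|n]; [auto|].
  destruct (dec _); [discriminate|]. intros E; inversion E; subst. simpl. discriminate.
Qed.

Lemma bd_black w k x y e : present (fst w) (snd w) -> bd w k x y = Some e -> pcol e = Black ->
  (x = Kx w /\ y = Ky w) \/ (x + y <= -8 /\ exists j, k <= j /\ x = -12 - 2 * j /\ y = 2 * j).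
Proof.
  intros Pw. unfold bd. destruct (Z.odd (x + y)); [discriminate|].
  destruct (Z_le_dec (x + y) (-8)) as [Hz|Hz].
  - intros H1 H2. right. split; auto. eapply F_black; eauto.
  - destruct (dec (treeK x y)).
    + destruct (dec (x = Kx w /\ y = Ky w)); [left; auto|discriminate].
    + destruct (dec (consumed w x y)); [discriminate|]. destruct (dec (deco x y)); [discriminate|].
      intros E; inversion E; subst; simpl; discriminate.
Qed.

Definition zone_ok (b : board) (k : Z) := forall x y, Z.odd (x + y) = false -> x + y <= -8 -> b x y = fuelsq k x y.
Definition black_in_zone (b : board) := forall x y e, b x y = Some e -> pcol e = Black -> Z.odd (x + y) = false /\ x + y <= -8.

Lemma fuel_near k j : k <= j ->
  fuelsq k (-12 - 2 * j + 1) (2 * j + 1) = Some rpawn /\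
  fuelsq k (-12 - 2 * j - 1) (2 * j + 1) = Some rpawn /\
  fuelsq k (-12 - 2 * j + 2) (2 * j + 2) = Some rpawn /\
  fuelsq k (-12 - 2 * j - 2) (2 * j + 2) = Some bpawn.
Proof.
  intros H. split; [|split; [|split]].
  - apply F_red; [intros j' [E1 E2]; lia| intros [E1 E2]; lia].
  - apply F_red; [intros j' [E1 E2]; lia| intros [E1 E2]; lia].
  - apply F_red; [intros j' [E1 E2]; lia| intros [E1 E2]; lia].
  - replace (-12 - 2 * j - 2) with (-12 - 2 * (j + 1)) by ring. replace (2 * j + 2) with (2 * (j + 1)) by ring.
    apply F_fuel. lia.
Qed.

Lemma odd_false_mod e : e mod 2 = 0 -> Z.odd e = false.
Proof. intros H. pose proof (Zmod_odd e). destruct (Z.odd e); [lia|auto]. Qed.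
Lemma odd_true_mod e : e mod 2 = 1 -> Z.odd e = true.
Proof. intros H. pose proof (Zmod_odd e). destruct (Z.odd e); [auto|lia]. Qed.
Ltac evn := apply odd_false_mod; Z.div_mod_to_equations; lia.

Lemma won_fuel b k : 0 <= k -> zone_ok b k -> black_in_zone b -> won_for_red (mkPos b Black).
Proof.
  intros Hk Hz Hb. split; [reflexivity|]. intros [q Hq].
  assert (Stuck : forall x y pc, b x y = Some pc -> pcol pc = Black ->
    pc = bpawn /\ exists j, k <= j /\ x = -12 - 2 * j /\ y = 2 * j).
  { intros x y pc H1 H2. pose proof (Hb x y pc H1 H2) as [Z0 Z1]. rewrite Hz in H1 by auto.
    destruct (F_black k x y pc H1 H2) as [j Hj]. split; [|eauto].
    unfold fuelsq in H1. destruct (dec _) as [_|n]; [inversion H1; auto|]. exfalso. apply n. eauto. }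
  assert (NoJ : forall x y pc d, b x y = Some pc -> pcol pc = Black -> ~ jump_ok pc (b, x, y) d).
  { intros x y pc d H1 H2 J. destruct (Stuck x y pc H1 H2) as [-> [j (Hj & -> & ->)]].
    destruct J as (Hp & _ & HL). unfold permitted, bpawn in Hp; cbn [pkind pcol] in Hp. pose proof (fuel_near k j Hj) as (N1 & N2 & N3 & N4).
    destruct (dir_cases d) as [[E1 E2]|[[E1 E2]|[[E1 E2]|[E1 E2]]]]; try (exfalso; rewrite E2 in Hp; lia).
    - rewrite E1, E2 in HL. rewrite Hz in HL by first [evn|lia].
      replace (-12 - 2 * j + 2 * 1) with (-12 - 2 * j + 2) in HL by ring.
      replace (2 * j + 2 * 1) with (2 * j + 2) in HL by ring. congruence.
    - rewrite E1, E2 in HL. rewrite Hz in HL by first [evn|lia].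
      replace (-12 - 2 * j + 2 * -1) with (-12 - 2 * j - 2) in HL by ring.
      replace (2 * j + 2 * 1) with (2 * j + 2) in HL by ring. congruence.
  }
  destruct Hq as [[Hf|Hi]|[_ Hs]].
  - destruct Hf as (x & y & pc & ds & H1 & H2 & Hn & J & _). simpl in H2.
    destruct ds as [|d ds]; [congruence|]. destruct J as [J _]. eapply NoJ; eauto.
  - destruct Hi as (x & y & pc & s & H1 & H2 & J & _). simpl in H2. eapply (NoJ x y pc (s 0%nat)); eauto.
    apply (J 0%nat).
  - destruct Hs as (x & y & pc & d & H1 & H2 & Hp & HN & _). simpl in H2.
    destruct (Stuck x y pc H1 H2) as [-> [j (Hj & -> & ->)]]. unfold permitted, bpawn in Hp; cbn [pkind pcol] in Hp.
    pose proof (fuel_near k j Hj) as (N1 & N2 & N3 & N4).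
    destruct (dir_cases d) as [[E1 E2]|[[E1 E2]|[[E1 E2]|[E1 E2]]]]; try (exfalso; rewrite E2 in Hp; lia).
    + rewrite E1, E2 in HN. rewrite Hz in HN by first [evn|lia]. congruence.
    + rewrite E1, E2 in HN. rewrite Hz in HN by first [evn|lia].
      replace (-12 - 2 * j + -1) with (-12 - 2 * j - 1) in HN by ring. congruence.
Qed.

Definition fstep (b : board) (k : Z) : board := fst (fst (jump_step rpawn (b, -13 - 2 * k, 2 * k + 1) SE)).

Lemma fstep_eq b k x y : fstep b k x y =
  if (x =? -11 - 2 * k) && (y =? 2 * k - 1) then Some rpawn
  else if (x =? -12 - 2 * k) && (y =? 2 * k) then None
  else if (x =? -13 - 2 * k) && (y =? 2 * k + 1) then None
  else b x y.
Proof.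
  unfold fstep, jump_step, upd. cbn [fst dx dy].
  replace (-13 - 2 * k + 2 * 1) with (-11 - 2 * k) by ring.
  replace (2 * k + 1 + 2 * -1) with (2 * k - 1) by ring.
  replace (-13 - 2 * k + 1) with (-12 - 2 * k) by ring.
  replace (2 * k + 1 + -1) with (2 * k) by ring. reflexivity.
Qed.

Lemma F_shift k x y : 0 <= k ->
  ~ (x = -11 - 2 * k /\ y = 2 * k - 1) -> ~ (x = -12 - 2 * k /\ y = 2 * k) -> ~ (x = -13 - 2 * k /\ y = 2 * k + 1) ->
  fuelsq k x y = fuelsq (k + 1) x y.
Proof.
  intros Hk N1 N2 N3. unfold fuelsq.
  destruct (dec (exists j, k <= j /\ x = -12 - 2 * j /\ y = 2 * j)) as [[j (A1 & A2 & A3)]|A];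
  destruct (dec (exists j, k + 1 <= j /\ x = -12 - 2 * j /\ y = 2 * j)) as [[j' (B1 & B2 & B3)]|B]; auto.
  - exfalso. destruct (Z.eq_dec j k); [subst; apply N2; auto|]. apply B. exists j. split; [lia|auto].
  - exfalso. apply A. exists j'. split; [lia|auto].
  - destruct (dec ((exists j, 0 <= j < k /\ x = -12 - 2 * j /\ y = 2 * j) \/ (x = -11 - 2 * k /\ y = 2 * k - 1))) as [[[j (C1 & C2 & C3)]|C]|C];
    destruct (dec ((exists j, 0 <= j < k + 1 /\ x = -12 - 2 * j /\ y = 2 * j) \/ (x = -11 - 2 * (k + 1) /\ y = 2 * (k + 1) - 1))) as [[[j' (D1 & D2 & D3)]|D]|D]; auto.
    all: exfalso.
    all: try (apply N1; split; lia); try (apply N2; split; lia); try (apply N3; split; lia).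
    all: try (apply D; left; exists j; split; [lia|split; lia]).
    all: try (apply C; left; exists j'; split; [lia|split; lia]).
    all: try (apply C; right; split; lia).
    all: try (apply D; right; split; lia).
    all: try (destruct (Z.eq_dec j' k); [apply N2; subst; split; lia|apply C; left; exists j'; split; [lia|split;lia]]).
Qed.

Lemma fstep_zone b k : 0 <= k -> zone_ok b k -> zone_ok (fstep b k) (k + 1).
Proof.
  intros Hk Hz x y Hod Hxy. rewrite fstep_eq.
  destruct ((x =? -11 - 2 * k) && (y =? 2 * k - 1))%bool eqn:E1.
  { apply andb_true_iff in E1. destruct E1 as [E1 E2]. apply Z.eqb_eq in E1, E2. subst.
    symmetry. apply F_red; [intros j [J1 J2]; lia|intros [J1 J2]; lia]. }
  destruct ((x =? -12 - 2 * k) && (y =? 2 * k))%bool eqn:E2.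
  { apply andb_true_iff in E2. destruct E2 as [E2 E3]. apply Z.eqb_eq in E2, E3. subst.
    symmetry. apply F_hole. lia. }
  destruct ((x =? -13 - 2 * k) && (y =? 2 * k + 1))%bool eqn:E3.
  { apply andb_true_iff in E3. destruct E3 as [E3 E4]. apply Z.eqb_eq in E3, E4. subst.
    symmetry. replace (-13 - 2 * k) with (-11 - 2 * (k + 1)) by ring. replace (2 * k + 1) with (2 * (k + 1) - 1) by ring.
    apply F_arm. }
  rewrite Hz by auto. apply F_shift; auto.
  - intros [-> ->]. rewrite !Z.eqb_refl in E1. discriminate.
  - intros [-> ->]. rewrite !Z.eqb_refl in E2. discriminate.
  - intros [-> ->]. rewrite !Z.eqb_refl in E3. discriminate.
Qed.

Lemma fstep_black b k : black_in_zone b -> black_in_zone (fstep b k).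
Proof.
  intros Hb x y e. rewrite fstep_eq.
  destruct ((x =? -11 - 2 * k) && (y =? 2 * k - 1))%bool; [intros E; inversion E; subst; simpl; discriminate|].
  destruct ((x =? -12 - 2 * k) && (y =? 2 * k))%bool; [discriminate|].
  destruct ((x =? -13 - 2 * k) && (y =? 2 * k + 1))%bool; [discriminate|]. apply Hb.
Qed.

Lemma fuel_jump b k : 0 <= k -> zone_ok b k -> jump_move (mkPos b Red) (mkPos (fstep b k) Black).
Proof.
  intros Hk Hz. left. exists (-13 - 2 * k), (2 * k + 1), rpawn, [SE].
  split; [rewrite Hz by first [evn|lia]; apply F_red; [intros j [J1 J2]; lia|intros [J1 J2]; lia]|].
  split; [reflexivity|]. split; [congruence|]. split.
  - split; [|exact I]. unfold jump_ok. cbn [dx dy]. split; [reflexivity|]. split.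
    + exists bpawn. rewrite Hz by first [evn|lia]. split; [|simpl; congruence].
      replace (-13 - 2 * k + 1) with (-12 - 2 * k) by ring. replace (2 * k + 1 + -1) with (2 * k) by ring.
      apply F_fuel. lia.
    + rewrite Hz by first [evn|lia]. replace (-13 - 2 * k + 2 * 1) with (-11 - 2 * k) by ring.
      replace (2 * k + 1 + 2 * -1) with (2 * k - 1) by ring. apply F_arm.
  - reflexivity.
Qed.

Lemma fuel_legal b k : 0 <= k -> zone_ok b k -> legal_move (mkPos b Red) (mkPos (fstep b k) Black).
Proof. intros; left; apply fuel_jump; auto. Qed.

Lemma bd_zone_ok w k : zone_ok (bd w k) k.
Proof. intros x y H1 H2. apply bd_zone; auto. Qed.

Lemma fstep_bd w k : 0 <= k -> fstep (bd w k) k = bd w (k + 1).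
Proof.
  intros Hk. apply functional_extensionality; intros x. apply functional_extensionality; intros y.
  destruct (Z.odd (x + y)) eqn:Eo.
  - rewrite bd_odd by auto. rewrite fstep_eq.
    destruct ((x =? -11 - 2 * k) && (y =? 2 * k - 1))%bool eqn:E1.
    { apply andb_true_iff in E1. destruct E1 as [E1 E2]. apply Z.eqb_eq in E1, E2. subst.
      exfalso. replace (-11 - 2 * k + (2 * k - 1)) with (2 * (-6)) in Eo by ring. rewrite Z.odd_mul in Eo. discriminate. }
    destruct ((x =? -12 - 2 * k) && (y =? 2 * k))%bool eqn:E2; [reflexivity|].
    destruct ((x =? -13 - 2 * k) && (y =? 2 * k + 1))%bool eqn:E3; [reflexivity|].
    apply bd_odd; auto.
  - destruct (Z_le_dec (x + y) (-8)) as [Hz|Hz].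
    + rewrite (fstep_zone (bd w k) k Hk (bd_zone_ok w k)) by auto. rewrite bd_zone; auto.
    + rewrite fstep_eq.
      destruct ((x =? -11 - 2 * k) && (y =? 2 * k - 1))%bool eqn:E1.
      { apply andb_true_iff in E1. destruct E1 as [E1 E2]. apply Z.eqb_eq in E1, E2. lia. }
      destruct ((x =? -12 - 2 * k) && (y =? 2 * k))%bool eqn:E2.
      { apply andb_true_iff in E2. destruct E2 as [E2 E3]. apply Z.eqb_eq in E2, E3. lia. }
      destruct ((x =? -13 - 2 * k) && (y =? 2 * k + 1))%bool eqn:E3.
      { apply andb_true_iff in E3. destruct E3 as [E3 E4]. apply Z.eqb_eq in E3, E4. lia. }
      unfold bd. rewrite Eo. destruct (Z_le_dec (x + y) (-8)); [lia|reflexivity].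
Qed.

Lemma fuel_nojump b k x y pc d : zone_ok b k -> Z.odd (x + y) = false -> x + y <= -8 ->
  b x y = Some pc -> pcol pc = Black -> ~ jump_ok pc (b, x, y) d.
Proof.
  intros Hz Ho Hxy H1 H2 J. rewrite Hz in H1 by auto.
  destruct (F_black k x y pc H1 H2) as [j (Hj & -> & ->)].
  assert (pc = bpawn) by (rewrite F_fuel in H1 by auto; inversion H1; auto). subst pc.
  destruct J as (Hp & _ & HL). unfold permitted, bpawn in Hp; cbn [pkind pcol] in Hp.
  pose proof (fuel_near k j Hj) as (N1 & N2 & N3 & N4).
  destruct (dir_cases d) as [[E1 E2]|[[E1 E2]|[[E1 E2]|[E1 E2]]]]; try (exfalso; rewrite E2 in Hp; lia).
  - rewrite E1, E2 in HL. rewrite Hz in HL by first [evn|lia].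
    replace (-12 - 2 * j + 2 * 1) with (-12 - 2 * j + 2) in HL by ring.
    replace (2 * j + 2 * 1) with (2 * j + 2) in HL by ring. congruence.
  - rewrite E1, E2 in HL. rewrite Hz in HL by first [evn|lia].
    replace (-12 - 2 * j + 2 * -1) with (-12 - 2 * j - 2) in HL by ring.
    replace (2 * j + 2 * 1) with (2 * j + 2) in HL by ring. congruence.
Qed.

Lemma K_sum v : present (fst v) (snd v) -> 0 <= Kx v + Ky v.
Proof. intros P. pose proof (Uv_nonneg v P). unfold Kx, Ky. lia. Qed.

Lemma has_succ_jump w k v : succ w v -> exists q, jump_move (mkPos (bd w k) Black) q.
Proof.
  intros Hs. destruct (trail_bwd k w v (t_step _ _ _ _ Hs)) as (ds & Hn & J & R).
  exists (mkPos (bd v k) Red). left. exists (Kx w), (Ky w), bking, ds.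
  split; [apply bd_king; eapply succ_present1; eauto|]. split; [reflexivity|]. split; auto. split; auto.
  cbn [brd to_move]. rewrite R. reflexivity.
Qed.

Lemma black_moves w k q : present (fst w) (snd w) -> (exists v, succ w v) ->
  legal_move (mkPos (bd w k) Black) q ->
  (exists v, reach w v /\ q = mkPos (bd v k) Red) \/
  (to_move q = Red /\ zone_ok (brd q) k /\ black_in_zone (brd q)).
Proof.
  intros Pw [v0 Hv0] Hl. destruct Hl as [[Hf|Hi]|[Hn _]].
  - left. destruct Hf as (x & y & pc & ds & H1 & H2 & Hn & J & Hq). cbn [brd to_move] in *.
    destruct (bd_black w k x y pc Pw H1 H2) as [[-> ->]|[Hz [j (Hj & -> & ->)]]].
    + rewrite bd_king in H1 by auto. inversion H1; subst pc.
      destruct (trail_fwd k ds w Pw J) as (v & [[E _]|[_ Hr]] & R); [contradiction|].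
      exists v. split; auto. rewrite R in Hq. exact Hq.
    + destruct ds as [|d ds]; [congruence|]. destruct J as [J _]. exfalso.
      eapply (fuel_nojump (bd w k) k); eauto; [apply bd_zone_ok|evn].
  - right. destruct Hi as (x & y & pc & s & H1 & H2 & J & Ht & Hq). cbn [brd to_move] in *.
    destruct (bd_black w k x y pc Pw H1 H2) as [[-> ->]|[Hz [j (Hj & -> & ->)]]].
    2: { exfalso. eapply (fuel_nojump (bd w k) k); eauto; [apply bd_zone_ok|evn|apply (J 0%nat)]. }
    rewrite bd_king in H1 by auto. inversion H1; subst pc.
    pose proof (jiter_inv k w s Pw J) as Inv.
    assert (Far : forall u v, ((u = Kx w /\ v = Ky w) \/
        (exists n, let '(_, xn, yn) := jiter bking (bd w k, Kx w, Ky w) s n in u = xn + dx (s n) /\ v = yn + dy (s n)))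
        -> -8 < u + v).
    { intros u v [[-> ->]|[n Hn]].
      - pose proof (K_sum w Pw). lia.
      - destruct (Inv n) as (vn & Pn & E). rewrite E in Hn. cbn beta iota in Hn. destruct Hn as [-> ->].
        pose proof (K_sum vn Pn). destruct (dir_cases (s n)) as [[E1 E2]|[[E1 E2]|[[E1 E2]|[E1 E2]]]]; lia. }
    split; [rewrite Ht; reflexivity|]. split.
    + intros u v Ho Hz. specialize (Hq u v). cbv zeta in Hq. destruct Hq as [_ Hq].
      rewrite Hq; [apply bd_zone; auto|]. intros R. apply Far in R. lia.
    + intros u v e He Hb. specialize (Hq u v). cbv zeta in Hq. destruct Hq as [Hq1 Hq2].
      destruct (classic ((u = Kx w /\ v = Ky w) \/
        (exists n, let '(_, xn, yn) := jiter bking (bd w k, Kx w, Ky w) s n in u = xn + dx (s n) /\ v = yn + dy (s n)))) as [R|R].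
      * rewrite (Hq1 R) in He. discriminate.
      * rewrite (Hq2 R) in He. destruct (bd_black w k u v e Pw He Hb) as [[-> ->]|[Hz [j (Hj & -> & ->)]]].
        -- exfalso. apply R. left; auto.
        -- split; [evn|lia].
  - exfalso. apply Hn. apply (has_succ_jump w k v0 Hv0).
Qed.

Lemma red_after_inf b k : 0 <= k -> zone_ok b k -> black_in_zone b ->
  exists q, legal_move (mkPos b Red) q /\ won_for_red q.
Proof.
  intros Hk Hz Hb. exists (mkPos (fstep b k) Black). split; [apply fuel_legal; auto|].
  apply won_fuel with (k + 1); [lia|apply fstep_zone; auto|apply fstep_black; auto].
Qed.

Lemma after_king_capture w k x1 y1 x3 y3 : present (fst w) (snd w) -> -8 < x1 + y1 -> -8 < x3 + y3 ->
  let b := upd (upd (upd (bd w k) x1 y1 None) (Kx w) (Ky w) None) x3 y3 (Some rpawn) in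
  zone_ok b k /\ black_in_zone b.
Proof.
  intros Pw H1 H3 b. pose proof (K_sum w Pw) as HK. split.
  - intros x y Ho Hz. unfold b, upd.
    destruct ((x =? x3) && (y =? y3))%bool eqn:E3; [apply andb_true_iff in E3; destruct E3 as [E E']; apply Z.eqb_eq in E, E'; lia|].
    destruct ((x =? Kx w) && (y =? Ky w))%bool eqn:E2; [apply andb_true_iff in E2; destruct E2 as [E E']; apply Z.eqb_eq in E, E'; lia|].
    destruct ((x =? x1) && (y =? y1))%bool eqn:E1; [apply andb_true_iff in E1; destruct E1 as [E E']; apply Z.eqb_eq in E, E'; lia|].
    apply bd_zone; auto.
  - intros x y e. unfold b, upd.
    destruct ((x =? x3) && (y =? y3))%bool eqn:E3; [intros E; inversion E; subst; simpl; discriminate|].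
    destruct ((x =? Kx w) && (y =? Ky w))%bool eqn:E2; [discriminate|].
    destruct ((x =? x1) && (y =? y1))%bool eqn:E1; [discriminate|].
    intros He Hb. destruct (bd_black w k x y e Pw He Hb) as [[-> ->]|[Hz [j (Hj & -> & ->)]]].
    + rewrite !Z.eqb_refl in E2. discriminate.
    + split; [evn|lia].
Qed.

Lemma not_consumed_up w : present (fst w) (snd w) -> forall u', (u' = Uv w \/ u' = Uv w + 1) ->
  ~ consumed w (fst (Pedge (snd w) (Uv w) u')) (snd (Pedge (snd w) (Uv w) u')).
Proof.
  intros Pw u' Hu (a & b & Hanc & Hab & E).
  assert (E' : Pedge (snd w) (Uv w) u' = Pedge (snd a) (Uv a) (Uv b)) by (rewrite <- E; destruct (Pedge _ _ _); reflexivity).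
  destruct (Pedge_inj _ _ _ _ _ _ Hu (succ_U' _ _ Hab) E') as (H1 & _ & _).
  pose proof (succ_height _ _ Hab). pose proof (anc_height _ _ Hanc). lia.
Qed.

Lemma red_unsafe w k : present (fst w) (snd w) -> w <> ([], 0) ->
  ~ (fst w <> [] /\ live (fst w) /\ snd w = S (fst w)) -> 0 <= k ->
  exists q, legal_move (mkPos (bd w k) Red) q /\ won_for_red q.
Proof.
  intros Pw Hn Hnr Hk. destruct w as [τ h].
  destruct (pred_ex τ h Pw Hn) as [τ' Hs]. remember (τ', h - 1) as a eqn:Ea. remember (τ, h) as w eqn:Ew.
  pose proof (succ_U' _ _ Hs) as HU. pose proof (Uv_nonneg w Pw) as HU0.
  pose proof (consumed_pred a w Hs) as Cp.
  destruct HU as [E|E].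
  - (* arrived via NW: jumper NW of w, jump SE *)
    assert (PE : Pedge (snd a) (Uv a) (Uv w) = (Kx w + 1, Ky w - 1)).
    { unfold Pedge. rewrite E. replace (Uv a =? Uv a + 1) with false by (symmetry; apply Z.eqb_neq; lia).
      subst a w. unfold Kx, Ky, Uv in *. cbn [fst snd] in *. f_equal; lia. }
    rewrite PE in Cp. cbn [fst snd] in Cp.
    assert (PJ : Pedge (snd w) (Uv w) (Uv w) = (Kx w - 1, Ky w + 1)).
    { unfold Pedge. replace (Uv w =? Uv w + 1) with false by (symmetry; apply Z.eqb_neq; lia).
      unfold Kx, Ky. f_equal; lia. }
    assert (RJ : bd w k (Kx w - 1) (Ky w + 1) = Some rpawn).
    { apply bd_P_red.
      - unfold Kx, Ky. evn.
      - unfold Kx, Ky. lia.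
      - unfold Ky. apply odd21.
      - pose proof (not_consumed_up w Pw (Uv w) (or_introl eq_refl)) as N. rewrite PJ in N. exact N.
      - intros D. destruct (deco_vertex _ _ w (Uv w) Pw (or_introl eq_refl) D (eq_sym PJ)) as (_ & _ & _ & X). lia. }
    eexists. split.
    + left. left. exists (Kx w - 1), (Ky w + 1), rpawn, [SE]. split; [exact RJ|]. split; [reflexivity|].
      split; [congruence|]. split; [|reflexivity]. split; [|exact I]. unfold jump_ok. cbn [dx dy].
      split; [reflexivity|]. split.
      * exists bking. split; [|simpl; congruence]. replace (Kx w - 1 + 1) with (Kx w) by ring.
        replace (Ky w + 1 + -1) with (Ky w) by ring. apply bd_king; auto.
      * replace (Kx w - 1 + 2 * 1) with (Kx w + 1) by ring. replace (Ky w + 1 + 2 * -1) with (Ky w - 1) by ring.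
        apply bd_P_cons; auto; [unfold Kx, Ky; evn|unfold Kx, Ky; lia|unfold Ky; replace (2 * snd w - 1) with (2 * (snd w - 1) + 1) by ring; apply odd21].
    + cbn [opp to_move]. unfold jump_step. cbn [dx dy].
      replace (Kx w - 1 + 1) with (Kx w) by ring. replace (Ky w + 1 + -1) with (Ky w) by ring.
      destruct (after_king_capture w k (Kx w - 1) (Ky w + 1) (Kx w - 1 + 2 * 1) (Ky w + 1 + 2 * -1) Pw
                  ltac:(unfold Kx, Ky in *; lia) ltac:(unfold Kx, Ky in *; lia)) as [Z1 Z2].
      apply won_fuel with k; auto.
  - (* arrived via NE: jumper NE of w, jump SW *)
    assert (PE : Pedge (snd a) (Uv a) (Uv w) = (Kx w - 1, Ky w - 1)).
    { unfold Pedge. rewrite E, Z.eqb_refl.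
      subst a w. unfold Kx, Ky, Uv in *. cbn [fst snd] in *. f_equal; lia. }
    rewrite PE in Cp. cbn [fst snd] in Cp.
    assert (PJ : Pedge (snd w) (Uv w) (Uv w + 1) = (Kx w + 1, Ky w + 1)).
    { unfold Pedge. rewrite Z.eqb_refl. unfold Kx, Ky. f_equal; lia. }
    assert (RJ : bd w k (Kx w + 1) (Ky w + 1) = Some rpawn).
    { apply bd_P_red.
      - unfold Kx, Ky. evn.
      - unfold Kx, Ky. lia.
      - unfold Ky. apply odd21.
      - pose proof (not_consumed_up w Pw (Uv w + 1) (or_intror eq_refl)) as N. rewrite PJ in N. exact N.
      - intros D. destruct (deco_vertex _ _ w (Uv w + 1) Pw (or_intror eq_refl) D (eq_sym PJ)) as (X1 & X2 & X3 & _).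
        apply Hnr. auto. }
    eexists. split.
    + left. left. exists (Kx w + 1), (Ky w + 1), rpawn, [SW]. split; [exact RJ|]. split; [reflexivity|].
      split; [congruence|]. split; [|reflexivity]. split; [|exact I]. unfold jump_ok. cbn [dx dy].
      split; [reflexivity|]. split.
      * exists bking. split; [|simpl; congruence]. replace (Kx w + 1 + -1) with (Kx w) by ring.
        replace (Ky w + 1 + -1) with (Ky w) by ring. apply bd_king; auto.
      * replace (Kx w + 1 + 2 * -1) with (Kx w - 1) by ring. replace (Ky w + 1 + 2 * -1) with (Ky w - 1) by ring.
        apply bd_P_cons; auto; [unfold Kx, Ky; evn|unfold Kx, Ky; lia|unfold Ky; replace (2 * snd w - 1) with (2 * (snd w - 1) + 1) by ring; apply odd21].
    + cbn [opp to_move]. unfold jump_step. cbn [dx dy].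
      replace (Kx w + 1 + -1) with (Kx w) by ring. replace (Ky w + 1 + -1) with (Ky w) by ring.
      destruct (after_king_capture w k (Kx w + 1) (Ky w + 1) (Kx w + 1 + 2 * -1) (Ky w + 1 + 2 * -1) Pw
                  ltac:(unfold Kx, Ky in *; lia) ltac:(unfold Kx, Ky in *; lia)) as [Z1 Z2].
      apply won_fuel with k; auto.
Qed.

Lemma bd_red w k x y pc : bd w k x y = Some pc -> pcol pc = Red -> pc = rpawn.
Proof.
  unfold bd. destruct (Z.odd (x + y)); [discriminate|].
  destruct (Z_le_dec (x + y) (-8)).
  - unfold fuelsq. destruct (dec _); [intros E; inversion E; subst; discriminate|].
    destruct (dec _); [discriminate|]. intros E; inversion E; auto.
  - destruct (dec (treeK x y)).
    + destruct (dec _); [intros E; inversion E; subst; discriminate|discriminate].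
    + destruct (dec _); [discriminate|]. destruct (dec _); [discriminate|]. intros E; inversion E; auto.
Qed.

Lemma deco_sum x y : deco x y -> (x + y) mod 4 = 2 /\ 0 <= x + y.
Proof.
  intros (τ & Hn & Hl & -> & ->). pose proof (live_root_present τ Hn Hl) as P.
  pose proof (U_nonneg τ (S τ) (present_gp _ _ P)).
  split; [|lia]. Z.div_mod_to_equations. lia.
Qed.

Lemma bd_deco w k x y : deco x y -> bd w k x y = None.
Proof.
  intros D. pose proof (deco_sum x y D) as [H1 H2]. pose proof (deco_odd x y D) as Hy.
  assert (Ho : Z.odd (x + y) = false) by (apply odd_false_mod; Z.div_mod_to_equations; lia).
  rewrite bd_nontree; auto; [|lia|apply odd_y_not_tree; auto].
  destruct (dec (consumed w x y)); [reflexivity|]. destruct (dec (deco x y)); [reflexivity|contradiction].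
Qed.

Lemma root_pred τ : τ <> [] -> live τ -> succ (τ, S τ - 1) (τ, S τ) /\ U τ (S τ - 1) = U τ (S τ) - 1.
Proof.
  intros Hn Hl. destruct τ as [|b σ _] using rev_ind; [congruence|].
  pose proof (S_gt_Hb σ b). pose proof (live_root_present _ Hn Hl) as P.
  split.
  - unfold succ; cbn [fst snd]. split; [|split; [auto|split; [lia|left; auto]]].
    split; [apply P|]. split; [right; split; auto; lia|left; lia].
  - rewrite U_conn by lia. rewrite U_ray by lia. rewrite root_U. ring.
Qed.

Lemma first_red_jump τ k x y pc d : τ <> [] -> live τ -> 0 <= k ->
  bd (τ, S τ) k x y = Some pc -> pcol pc = Red -> jump_ok pc (bd (τ, S τ) k, x, y) d ->
  x = -13 - 2 * k /\ y = 2 * k + 1 /\ d = SE /\ pc = rpawn.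
Proof.
  intros Hn Hl Hk H1 H2 J. set (w := (τ, S τ)) in *.
  assert (Pw : present (fst w) (snd w)) by (apply live_root_present; auto).
  pose proof (bd_red _ _ _ _ _ H1 H2) as ->.
  destruct J as (Hp & (e & He & Hc) & HL). unfold permitted, rpawn in Hp; cbn [pkind pcol] in Hp.
  assert (Hb : pcol e = Black) by (destruct (pcol e); [auto|simpl in Hc; congruence]).
  pose proof (Uv_nonneg w Pw) as HU0.
  destruct (dir_cases d) as [[E1 E2]|[[E1 E2]|[[E1 E2]|[E1 E2]]]]; try (exfalso; rewrite E2 in Hp; lia).
  -
    rewrite E1, E2 in *.
    destruct (bd_black w k _ _ e Pw He Hb) as [[X Y]|[Hz [j (Hj & X & Y)]]].
    + exfalso. (* landing is Pedge (S-1) U U, red *)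
      assert (Hx : x = Kx w - 1) by lia. assert (Hy : y = Ky w + 1) by lia. subst x y.
      replace (Kx w - 1 + 2 * 1) with (Kx w + 1) in HL by ring. replace (Ky w + 1 + 2 * -1) with (Ky w - 1) in HL by ring.
      rewrite bd_P_red in HL; [discriminate| unfold Kx, Ky; evn | unfold Kx, Ky; lia
                              | unfold Ky; replace (2 * snd w - 1) with (2 * (snd w - 1) + 1) by ring; apply odd21 | |].
      * intros (a & b & Hanc & Hab & E).
        destruct (root_pred τ Hn Hl) as [Rs RU].
        assert (E' : Pedge (S τ - 1) (U τ (S τ)) (U τ (S τ)) = Pedge (snd a) (Uv a) (Uv b)).
        { rewrite <- E. unfold Pedge. replace (U τ (S τ) =? U τ (S τ) + 1) with false by (symmetry; apply Z.eqb_neq; lia).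
          unfold Kx, Ky, w, Uv; cbn [fst snd]. f_equal; lia. }
        destruct (Pedge_inj _ _ _ _ _ _ (or_introl eq_refl) (succ_U' _ _ Hab) E') as (F1 & F2 & F3).
        pose proof (succ_height _ _ Hab) as Hh.
        assert (b = w).
        { apply vertex_id'; [eapply succ_present2; eauto|auto|unfold w; cbn [snd]; lia|unfold w, Uv in *; cbn [fst snd]; lia]. }
        subst b. pose proof (succ_unique_pred _ _ _ Hab Rs) as ->. unfold Uv in F2; cbn [fst snd] in F2. lia.
      * intros D. pose proof (deco_sum _ _ D) as [D1 _]. unfold Kx, Ky in D1.
        Z.div_mod_to_equations. lia.
    +
      assert (Hj' : j = k).
      { destruct (Z.eq_dec j k) as [|Hne]; auto. exfalso.
        rewrite bd_zone in HL by first [evn|lia].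
        rewrite F_red in HL; [discriminate| intros j' [J1 J2]; lia| intros [J1 J2]; lia]. }
      subst j. split; [lia|]. split; [lia|]. split; [|reflexivity].
      destruct d; simpl in E1, E2; try lia; reflexivity.
  -
    exfalso. rewrite E1, E2 in *.
    destruct (bd_black w k _ _ e Pw He Hb) as [[X Y]|[Hz [j (Hj & X & Y)]]].
    + assert (Hx : x = Kx w + 1) by lia. assert (Hy : y = Ky w + 1) by lia. subst x y.
      rewrite bd_deco in H1; [discriminate|]. exists τ. split; [exact Hn|]. split; [exact Hl|].
      unfold Kx, Ky, w, Uv; cbn [fst snd]. split; lia.
    + rewrite bd_zone in HL by first [evn|lia].
      rewrite F_red in HL; [discriminate| intros j' [J1 J2]; lia| intros [J1 J2]; lia].
Qed.

Lemma red_safe τ k q : τ <> [] -> live τ -> 0 <= k ->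
  legal_move (mkPos (bd (τ, S τ) k) Red) q -> q = mkPos (bd (τ, S τ) (k + 1)) Black.
Proof.
  intros Hn Hl Hk Hq. set (w := (τ, S τ)) in *.
  assert (Pw : present (fst w) (snd w)) by (apply live_root_present; auto).
  assert (Second : forall d2, ~ jump_ok rpawn (fstep (bd w k) k, -11 - 2 * k, 2 * k - 1) d2).
  { intros d2 (Hp & (e & He & Hc) & _). unfold permitted, rpawn in Hp; cbn [pkind pcol] in Hp.
    assert (Hb : pcol e = Black) by (destruct (pcol e); [auto|simpl in Hc; congruence]).
    rewrite fstep_bd in He by auto.
    destruct (bd_black w (k + 1) _ _ e Pw He Hb) as [[X Y]|[Hz [j (Hj & X & Y)]]].
    - pose proof (K_sum w Pw). destruct (dir_cases d2) as [[E1 E2]|[[E1 E2]|[[E1 E2]|[E1 E2]]]]; lia.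
    - destruct (dir_cases d2) as [[E1 E2]|[[E1 E2]|[[E1 E2]|[E1 E2]]]]; lia. }
  destruct Hq as [[Hf|Hi]|[Hn' _]].
  - destruct Hf as (x & y & pc & ds & H1 & H2 & Hne & J & Hq). cbn [brd to_move] in *.
    destruct ds as [|d ds]; [congruence|]. destruct J as [J Js].
    destruct (first_red_jump τ k x y pc d Hn Hl Hk H1 H2 J) as (-> & -> & -> & ->).
    destruct ds as [|d2 ds].
    + cbn [jumps_result fold_left] in Hq. unfold jumps_result in Hq. cbn [fold_left] in Hq.
      change (jump_step rpawn (bd w k, -13 - 2 * k, 2 * k + 1) SE) with
        (fstep (bd w k) k, -13 - 2 * k + 2 * dx SE, 2 * k + 1 + 2 * dy SE) in Hq.
      rewrite fstep_bd in Hq by auto. exact Hq.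
    + exfalso. destruct Js as [J2 _].
      change (jump_step rpawn (bd w k, -13 - 2 * k, 2 * k + 1) SE) with
        (fstep (bd w k) k, -13 - 2 * k + 2 * dx SE, 2 * k + 1 + 2 * dy SE) in J2.
      cbn [dx dy] in J2. replace (-13 - 2 * k + 2 * 1) with (-11 - 2 * k) in J2 by ring.
      replace (2 * k + 1 + 2 * -1) with (2 * k - 1) in J2 by ring. eapply Second; eauto.
  - exfalso. destruct Hi as (x & y & pc & s & H1 & H2 & J & _). cbn [brd to_move] in *.
    pose proof (J 0%nat) as J0. cbn [jiter] in J0.
    destruct (first_red_jump τ k x y pc (s 0%nat) Hn Hl Hk H1 H2 J0) as (-> & -> & E0 & ->).
    pose proof (J 1%nat) as J1. cbn [jiter] in J1. rewrite E0 in J1.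
    change (jump_step rpawn (bd w k, -13 - 2 * k, 2 * k + 1) SE) with
      (fstep (bd w k) k, -13 - 2 * k + 2 * dx SE, 2 * k + 1 + 2 * dy SE) in J1.
    cbn [dx dy] in J1. replace (-13 - 2 * k + 2 * 1) with (-11 - 2 * k) in J1 by ring.
    replace (2 * k + 1 + 2 * -1) with (2 * k - 1) in J1 by ring. eapply Second; eauto.
  - exfalso. apply Hn'. exists (mkPos (fstep (bd w k) k) Black). apply fuel_jump; auto. apply bd_zone_ok.
Qed.

Definition Bpos τ k := mkPos (bd (τ, S τ) k) Black.

Lemma live_of τ d : lab c0 τ = Some d -> hasKids d -> live τ.
Proof. intros H1 H2. exists d; auto. Qed.

Lemma root_present τ : live τ -> present τ (S τ).
Proof.
  intros Hl. destruct (list_eq_dec Nat.eq_dec τ []) as [->|Hn].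
  - rewrite S_nil. apply present_root. lia.
  - apply live_root_present; auto.
Qed.

Lemma root_succ τ : live τ -> succ (τ, S τ) (τ, S τ + 1).
Proof.
  intros Hl. pose proof (root_present τ Hl) as P. unfold succ; cbn [fst snd].
  split; auto. split; [|split; [auto|left; auto]].
  split; [apply live_valid; auto|]. split; [|right; auto].
  destruct P as [_ [[[E H]|[E H]] _]]; [left; split; auto; lia|right; split; auto; lia].
Qed.

Lemma Win_black_inv a p : Win a p -> to_move p = Black -> ~ won_for_red p -> forall q, legal_move p q -> Win a q.
Proof. intros H Ht Hw. inversion H; subst; try contradiction; try congruence; auto. Qed.

Lemma Win_red_inv a p : Win a p -> to_move p = Red -> exists q b, legal_move p q /\ Win b q /\ olt b a.
Proof.
  intros H Ht. inversion H; subst.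
  - destruct H0 as [H0 _]. congruence.
  - eauto.
  - congruence.
Qed.

Lemma not_won_red b : ~ won_for_red (mkPos b Red).
Proof. intros [H _]. discriminate. Qed.

Lemma black_not_won τ k : live τ -> ~ won_for_red (Bpos τ k).
Proof.
  intros Hl [_ Hw]. apply Hw. destruct (has_succ_jump (τ, S τ) k _ (root_succ τ Hl)) as [q Hq].
  exists q. left. exact Hq.
Qed.

Lemma ole_S x : ole x (OS x).
Proof. apply (proj1 olt_ole_aux). apply ole_refl. Qed.

Lemma child_root_reach τ b : valid (τ ++ [b]) -> reach (τ, S τ) (τ ++ [b], S (τ ++ [b])).
Proof.
  intros V. pose proof (valid_parent τ b V) as Lp.
  assert (Pc : present (τ ++ [b]) (S (τ ++ [b]))).
  { split; auto. split; [right; split; [destruct τ; discriminate|pose proof (S_gt_Hb τ b); lia]|left; lia]. }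
  apply anc_reach.
  - split; [apply root_present; auto|]. split; [exact Pc|]. right. exists b, []. cbn [fst snd].
    split; auto. pose proof (Hb_gt_S τ b). lia.
  - intros E. apply pair_equal_spec in E. destruct E as [E _]. apply (f_equal (@length nat)) in E.
    rewrite length_app in E. simpl in E. lia.
Qed.

Lemma main_value : forall d, forall τ k, lab c0 τ = Some d -> hasKids d -> 0 <= k -> Fv (embed d) (Bpos τ k).
Proof.
  apply (kid_ind (fun d => forall τ k, lab c0 τ = Some d -> hasKids d -> 0 <= k -> Fv (embed d) (Bpos τ k))).
  intros d IH τ k Hlab Hkd Hk.
  pose proof (live_of τ d Hlab Hkd) as Hl. pose proof (root_present τ Hl) as Pr.
  assert (Hone : olt OZ (embed d)).
  { pose proof (hasKids_one d Hkd) as X. apply ole_inv in X. exact X. }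
  split.
  -
    apply WB; [apply black_not_won; auto|reflexivity|].
    intros q Hq. destruct (black_moves (τ, S τ) k q Pr (ex_intro _ _ (root_succ τ Hl)) Hq)
      as [[v [Hr ->]]|(Ht & Hz & Hb)].
    + destruct (reach_anc _ _ Hr) as [Ha Hne].
      destruct v as [τ' h']. pose proof (anc_present2 _ _ Ha) as Pv. cbn [fst snd] in Pv.
      destruct (classic (τ' <> [] /\ live τ' /\ h' = S τ')) as [[Hn' [Hl' ->]]|Hunsafe].
      * (* safe stop at a live root *)
        destruct Ha as (_ & _ & [[E _]|[b [ρ [E _]]]]); cbn [fst snd] in E.
        { exfalso. subst τ'. apply Hne. reflexivity. }
        subst τ'. destruct Hl' as [d'' [Hl'' Hk'']].
        destruct (lab c0 (τ ++ [b])) as [d'|] eqn:Eb.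
        2: { exfalso. rewrite snoc_cons in Hl''. rewrite lab_app_none in Hl''; [discriminate|auto]. }
        assert (Hkid : kids d b = Some d') by (rewrite lab_snoc, Hlab in Eb; exact Eb).
        pose proof (proj1 (kids_sup d) b d' Hkid) as Hsup.
        assert (Hlt : olt (embed d') (embed d)) by (apply ole_inv in Hsup; exact Hsup).
        destruct ρ as [|c ρ].
        -- assert (d'' = d') by congruence. subst d''.
           destruct (IH b d' Hkid (τ ++ [b]) (k + 1) Eb Hk'' ltac:(lia)) as [W _].
           apply WR with (mkPos (fstep (bd (τ ++ [b], S (τ ++ [b])) k) k) Black) (embed d').
           ++ apply not_won_red.
           ++ reflexivity.
           ++ apply fuel_legal; auto. apply bd_zone_ok.
           ++ rewrite fstep_bd by auto. exact W.
           ++ exact Hlt.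
        -- assert (Hkd' : hasKids d').
           { assert (V : valid ((τ ++ [b]) ++ [c])).
             { apply valid_prefix with ρ. rewrite <- app_assoc. cbn. rewrite <- snoc_cons. exists d''. auto. }
             destruct (valid_parent _ _ V) as [d0 [E0 K0]]. rewrite Eb in E0. inversion E0; subst; auto. }
           destruct (IH b d' Hkid (τ ++ [b]) k Eb Hkd' Hk) as [W _].
           assert (Hr' : reach (τ ++ [b], S (τ ++ [b])) (τ ++ b :: c :: ρ, S (τ ++ b :: c :: ρ))).
           { apply anc_reach.
             - split; [apply root_present; exists d'; auto|]. split; [exact Pv|].
               right. exists c, ρ. cbn [fst snd]. split; [rewrite <- app_assoc; reflexivity|].
               pose proof (Hb_gt_S (τ ++ [b]) c). lia.
             - intros E. inversion E as [[E1 E2]]. rewrite snoc_cons in E1.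
               apply (f_equal (@length nat)) in E1. rewrite !length_app in E1. simpl in E1. lia. }
           destruct (trail_bwd k _ _ Hr') as (ds & Hds & J & R).
           assert (Lg : legal_move (Bpos (τ ++ [b]) k) (mkPos (bd (τ ++ b :: c :: ρ, S (τ ++ b :: c :: ρ)) k) Red)).
           { left. left. exists (Kx (τ ++ [b], S (τ ++ [b]))), (Ky (τ ++ [b], S (τ ++ [b]))), bking, ds.
             split; [apply bd_king; apply root_present; exists d'; auto|]. split; [reflexivity|].
             split; auto. split; auto. unfold Bpos. cbn [brd to_move]. rewrite R. reflexivity. }
           pose proof (Win_black_inv _ _ W eq_refl (black_not_won _ _ (ex_intro _ d' (conj Eb Hkd'))) _ Lg) as W2.
           apply Win_mono with (embed d'); auto. apply olt_ole; auto.
      * (* unsafe stop *)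
        assert (Hn0 : (τ', h') <> ([], 0)).
        { intros E. inversion E; subst. pose proof (anc_height _ _ Ha) as [X _]. cbn [snd] in X.
          pose proof (S_ge τ). destruct (Z.eq_dec (S τ) 0) as [Z0|Z0]; [|lia].
          assert (τ = []) by (destruct Ha as (_ & _ & [[E1 _]|[b [ρ [E1 _]]]]); cbn [fst snd] in E1; [auto|destruct τ; discriminate]).
          subst τ. apply Hne. reflexivity. }
        destruct (red_unsafe (τ', h') k Pv Hn0 Hunsafe Hk) as [q' [Hq' Hw']].
        apply WR with q' OZ; auto; [apply not_won_red|apply W0; auto].
    + destruct q as [bq tq]. cbn [to_move brd] in *. subst tq.
      destruct (red_after_inf bq k Hk Hz Hb) as [q' [Hq' Hw']].
      apply WR with q' OZ; auto; [apply not_won_red|apply W0; auto].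
  -
    intros c Hc. apply (proj2 (kids_sup d)). intros n d' Hkid.
    assert (Eb : lab c0 (τ ++ [n]) = Some d') by (rewrite lab_snoc, Hlab; exact Hkid).
    assert (V : valid (τ ++ [n])) by (exists d'; auto).
    pose proof (child_root_reach τ n V) as Hr.
    destruct (trail_bwd k _ _ Hr) as (ds & Hds & J & R).
    assert (Lg : legal_move (Bpos τ k) (mkPos (bd (τ ++ [n], S (τ ++ [n])) k) Red)).
    { left. left. exists (Kx (τ, S τ)), (Ky (τ, S τ)), bking, ds.
      split; [apply bd_king; auto|]. split; [reflexivity|].
      split; auto. split; auto. unfold Bpos. cbn [brd to_move]. rewrite R. reflexivity. }
    pose proof (Win_black_inv _ _ Hc eq_refl (black_not_won _ _ Hl) _ Lg) as W1.
    destruct (Win_red_inv _ _ W1 eq_refl) as (q' & b & Hq' & Wb & Hbc).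
    destruct (classic (hasKids d')) as [Hkd'|Hkd'].
    + assert (Hn : τ ++ [n] <> []) by (destruct τ; discriminate).
      pose proof (red_safe (τ ++ [n]) k q' Hn (ex_intro _ d' (conj Eb Hkd')) Hk Hq') as ->.
      destruct (IH n d' Hkid (τ ++ [n]) (k + 1) Eb Hkd' ltac:(lia)) as [_ Hmin].
      constructor. eapply ole_olt_trans; [apply Hmin; exact Wb|exact Hbc].
    + apply ole_trans with (OS OZ).
      * constructor. constructor. apply noKids_zero; auto.
      * constructor. eapply ole_olt_trans; [apply ole_zero|exact Hbc].
Qed.
End Tree.

Theorem theorem2 :
  forall a : Ord, countable_ordinal a ->
  exists p : position, valid_pos p /\ has_value p a.
Proof.
  intros a [c Hc].
  destruct (classic (hasKids c)) as [Hk|Hk].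
  - exists (Bpos c [] 0). split.
    + intros x y Ho. unfold Bpos. cbn [brd]. apply bd_odd; auto.
    + exists Fv. split; [apply Fv_solution|].
      apply Fv_oeq with (embed c); [|split; apply Hc].
      apply (main_value c Hk c [] 0); auto; lia.
  - exists (mkPos (fun _ _ => None) Black). split.
    + intros x y _. reflexivity.
    + exists Fv. split; [apply Fv_solution|].
      assert (Hw : won_for_red (mkPos (fun _ _ => None) Black)).
      { split; [reflexivity|]. intros [q Hq]. destruct Hq as [[Hf|Hi]|[_ Hs]].
        - destruct Hf as (x & y & pc & _ & H & _). discriminate.
        - destruct Hi as (x & y & pc & _ & H & _). discriminate.
        - destruct Hs as (x & y & pc & _ & H & _). discriminate. }
      apply Fv_oeq with OZ.
      * split; [apply W0; auto|]. intros; constructor.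
      * split; [constructor|]. eapply ole_trans; [apply Hc|]. apply noKids_zero; auto.
Qed.
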